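(* Let $p>1$. For $c\ge0$ let $N(c)\ge0$ be defined by $N(c)^2+\frac{2}{p+1}N(c)^{p+1}=c$, and let $L(c)=4\int_0^1\bigl(1-z^2+\frac{2}{p+1}N(c)^{p-1}(1-z^{p+1})\bigr)^{-1/2}dz$ (the minimal period of the solutions of $\ddot y+y+|y|^{p-1}y=0$ with $\dot y^2+y^2+\frac{2}{p+1}|y|^{p+1}=c$, and $L(0)=2\pi$). Then $M=L^{-1}:(0,2\pi]\to[0,\infty)$ is $C^\infty$ on $(0,2\pi)$ and there is a constant $\alpha>0$ such that, as $s\to2\pi-$, $$M(s)=\alpha(2\pi-s)^{\frac{2}{p-1}}(1+O(2\pi-s)),\qquad \sqrt{M(s)}=\sqrt\alpha(2\pi-s)^{\frac1{p-1}}(1+O(2\pi-s)),$$ $$M'(s)=-\tfrac{2\alpha}{p-1}(2\pi-s)^{\frac{3-p}{p-1}}(1+O(2\pi-s)),\qquad (\sqrt M)'(s)=-\tfrac{\sqrt\alpha}{p-1}(2\pi-s)^{\frac{2-p}{p-1}}(1+O(2\pi-s)),$$ $$M''(s)=\tfrac{2\alpha(3-p)}{(p-1)^2}(2\pi-s)^{\frac{4-2p}{p-1}}(1+O(2\pi-s)),\qquad (\sqrt M)''(s)=\tfrac{\sqrt\alpha(2-p)}{(p-1)^2}(2\pi-s)^{\frac{3-2p}{p-1}}(1+O(2\pi-s)).$$ *)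

(* Defs.v *)
From Stdlib Require Import Reals.
From Coquelicot Require Import Coquelicot.
Open Scope R_scope.

(* real power x^y for x >= 0 (convention 0^y = 0, used only with y > 0
   when the base can vanish) *)
Definition rpow (x y : R) : R := if Rlt_dec 0 x then Rpower x y else 0.

Definition period_integrand (p n z : R) : R :=
  rpow (1 - z ^ 2 + 2 / (p + 1) * rpow n (p - 1) * (1 - rpow z (p + 1))) (-1/2).

Definition period (p : R) (N : R -> R) (c : R) : R :=
  4 * RInt_gen (period_integrand p (N c)) (at_point 0) (at_left 1).

(* f(s) = k (2π - s)^a (1 + O(2π - s)) as s -> 2π-, read as
   |f(s) - k t^a| <= C t * t^a  with t = 2π - s, for s close to 2π from below *)
Definition asympt_left_2pi (f : R -> R) (k a : R) : Prop :=
  exists C delta : R, 0 < delta /\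
    forall s, 2 * PI - delta < s < 2 * PI ->
      Rabs (f s - k * rpow (2 * PI - s) a) <= C * (2 * PI - s) * rpow (2 * PI - s) a.

(* Main.v *)
Require Import Defs.
From Stdlib Require Import Reals Lra Lia Psatz.
From Coquelicot Require Import Coquelicot.
Open Scope R_scope.


Lemma is_derive_Rpower (r x : R) : 0 < x ->
  is_derive (fun y => Rpower y r) x (r * Rpower x (r - 1)).
Proof. intros Hx. apply is_derive_Reals. now apply derivable_pt_lim_power. Qed.

Lemma Rpower_pos (x y : R) : 0 < Rpower x y.
Proof. unfold Rpower. apply exp_pos. Qed.

Lemma Rpower_1_base (y : R) : Rpower 1 y = 1.
Proof. unfold Rpower. rewrite ln_1, Rmult_0_r. apply exp_0. Qed.

Lemma rpow_pos (x y : R) : 0 < x -> rpow x y = Rpower x y.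
Proof. intros H. unfold rpow. destruct (Rlt_dec 0 x); [reflexivity| lra]. Qed.

Lemma rpow_nonpos (x y : R) : x <= 0 -> rpow x y = 0.
Proof. intros H. unfold rpow. destruct (Rlt_dec 0 x); [lra| reflexivity]. Qed.

Lemma rpow_ge0 (x y : R) : 0 <= rpow x y.
Proof. unfold rpow. destruct (Rlt_dec 0 x). left; apply Rpower_pos. lra. Qed.

Lemma Rpower_le_exp (x y z : R) : 0 < x <= 1 -> y <= z -> Rpower x z <= Rpower x y.
Proof.
  intros [H0 H1] Hyz. unfold Rpower.
  assert (ln x <= 0).
  { destruct (Req_dec x 1). subst. rewrite ln_1; lra. left. rewrite <- ln_1. apply ln_increasing; lra. }
  destruct (Req_dec (ln x) 0) as [E|E].
  - rewrite E, !Rmult_0_r. lra.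
  - destruct (Req_dec y z) as [->|Hne]; [lra|].
    left. apply exp_increasing. nra.
Qed.

Lemma Rpower_le1 (x y : R) : 0 < x <= 1 -> 0 <= y -> Rpower x y <= 1.
Proof.
  intros Hx Hy. rewrite <- (Rpower_O x) by lra. apply Rpower_le_exp; lra.
Qed.

Lemma Rpower_inc_base (a b c : R) : 0 <= c -> 0 < a <= b -> Rpower a c <= Rpower b c.
Proof. apply Rle_Rpower_l. Qed.

Lemma continuous_Rpower (r x : R) : 0 < x -> continuous (fun y => Rpower y r) x.
Proof. intros Hx. apply (ex_derive_continuous (K:=R_AbsRing) (V:=R_NormedModule)). eexists. now apply is_derive_Rpower. Qed.

Lemma continuity_pt_Rpower (r x : R) : 0 < x -> continuity_pt (fun y => Rpower y r) x.
Proof. intros Hx. apply continuity_pt_filterlim. now apply continuous_Rpower. Qed.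


Lemma cont_eps (f : R -> R) x :
  (forall eps, 0 < eps -> exists d, 0 < d /\ forall y, Rabs (y - x) < d -> Rabs (f y - f x) < eps) ->
  continuity_pt f x.
Proof.
  intros H. unfold continuity_pt, continue_in, limit1_in, limit_in. simpl. unfold R_dist.
  intros eps Heps. destruct (H eps Heps) as [d [Hd Hy]]. exists d. split; [lra|].
  intros y [_ Hy']. now apply Hy.
Qed.

Lemma cont_eps_inv (f : R -> R) x : continuity_pt f x ->
  forall eps, 0 < eps -> exists d, 0 < d /\ forall y, Rabs (y - x) < d -> Rabs (f y - f x) < eps.
Proof.
  unfold continuity_pt, continue_in, limit1_in, limit_in. simpl. unfold R_dist.
  intros H eps Heps. destruct (H eps Heps) as [d [Hd Hy]]. exists d. split; [lra|].
  intros y Hyx. destruct (Req_dec y x) as [->|Hne].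
  - rewrite Rminus_eq_0, Rabs_R0. lra.
  - apply Hy. split; [|exact Hyx]. unfold D_x, no_cond. split; auto.
Qed.

Lemma cont_ext_loc (f g : R -> R) x d : 0 < d ->
  (forall y, Rabs (y - x) < d -> f y = g y) -> continuity_pt g x -> continuity_pt f x.
Proof.
  intros Hd Hfg Hg. apply cont_eps. intros eps Heps.
  destruct (cont_eps_inv g x Hg eps Heps) as [d' [Hd' H']].
  exists (Rmin d d'). split. apply Rmin_pos; lra.
  intros y Hy. rewrite !Hfg. apply H'. eapply Rlt_le_trans; [exact Hy| apply Rmin_r].
  rewrite Rminus_eq_0, Rabs_R0; lra.
  eapply Rlt_le_trans; [exact Hy| apply Rmin_l].
Qed.

Definition Qf (p z : R) : R :=
  if Req_EM_T z 1 then p + 1 else (1 - rpow z (p + 1)) / (1 - z).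

Lemma Qf_1 p : Qf p 1 = p + 1.
Proof. unfold Qf. destruct (Req_EM_T 1 1); [reflexivity| lra]. Qed.

Lemma Qf_ne p z : z <> 1 -> Qf p z = (1 - rpow z (p + 1)) / (1 - z).
Proof. intros H. unfold Qf. destruct (Req_EM_T z 1); [lra| reflexivity]. Qed.

Lemma Qf_eq p z : (1 - rpow z (p + 1)) = (1 - z) * Qf p z.
Proof.
  destruct (Req_dec z 1) as [->|H].
  - rewrite rpow_pos by lra. rewrite Rpower_1_base. ring.
  - rewrite Qf_ne by auto. field. lra.
Qed.

Lemma Rpower_le_self (z q : R) : 0 < z <= 1 -> 1 <= q -> Rpower z q <= z.
Proof.
  intros Hz Hq. rewrite <- (Rpower_1 z) at 2 by lra. apply Rpower_le_exp; lra.
Qed.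

Lemma Qf_ge1 p z : 1 < p -> 0 <= z <= 1 -> 1 <= Qf p z.
Proof.
  intros hp [H0 H1]. destruct (Req_dec z 1) as [->|Hne].
  - rewrite Qf_1; lra.
  - rewrite Qf_ne by auto. apply (Rmult_le_reg_r (1 - z)). lra.
    unfold Rdiv. rewrite Rmult_assoc, Rinv_l, Rmult_1_r by lra.
    destruct (Req_dec z 0) as [->|Hz0].
    + rewrite rpow_nonpos by lra. lra.
    + rewrite rpow_pos by lra. pose proof (Rpower_le_self z (p+1)). lra.
Qed.

Lemma Qf_bounds p z : 1 < p -> z <= 1 -> 0 <= Qf p z <= p + 1.
Proof.
  intros hp Hz. destruct (Req_dec z 1) as [->|Hne].
  - rewrite Qf_1; lra.
  - rewrite Qf_ne by auto.
    destruct (Rle_dec z 0) as [Hz0|Hz0].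
    + rewrite rpow_nonpos by lra. split.
      * apply Rmult_le_pos; [lra| left; apply Rinv_0_lt_compat; lra].
      * apply (Rmult_le_reg_r (1 - z)). lra.
        unfold Rdiv. rewrite Rmult_assoc, Rinv_l, Rmult_1_r by lra. nra.
    + assert (Hz1 : 0 < z < 1) by lra. rewrite rpow_pos by lra.
      destruct (MVT_gen (fun y => Rpower y (p+1)) z 1 (fun y => (p+1) * Rpower y (p+1-1)))
        as [c [Hc Heq]].
      { intros x Hx. rewrite Rmin_left, Rmax_right in Hx by lra. apply is_derive_Rpower; lra. }
      { intros x Hx. rewrite Rmin_left, Rmax_right in Hx by lra. apply continuity_pt_Rpower; lra. }
      rewrite Rmin_left, Rmax_right in Hc by lra.
      rewrite Rpower_1_base in Heq.
      assert (Hq: 1 - Rpower z (p + 1) = (p + 1) * Rpower c (p + 1 - 1) * (1 - z)) by lra.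
      rewrite Hq. unfold Rdiv. rewrite Rmult_assoc, Rinv_r, Rmult_1_r by lra.
      pose proof (Rpower_pos c (p+1-1)).
      assert (Rpower c (p + 1 - 1) <= 1) by (apply Rpower_le1; lra).
      split; nra.
Qed.

Lemma rpow_le_sq z q : 2 <= q -> Rabs z <= 1 -> rpow z q <= z ^ 2.
Proof.
  intros Hq Hz. destruct (Rle_dec z 0).
  - rewrite rpow_nonpos by lra. nra.
  - rewrite rpow_pos by lra. rewrite <- (Rpower_pow 2 z) by lra.
    apply Rpower_le_exp. rewrite Rabs_right in Hz; lra. simpl; lra.
Qed.

Lemma rpow_cont (z q : R) : 2 <= q -> 0 <= z -> continuity_pt (fun y => rpow y q) z.
Proof.
  intros Hq Hz. destruct (Req_dec z 0) as [->|Hz0].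
  - apply cont_eps. intros eps Heps. exists (Rmin 1 eps). split. apply Rmin_pos; lra.
    intros y Hy. rewrite Rminus_0_r in Hy.
    rewrite (rpow_nonpos 0) by lra. rewrite Rminus_0_r.
    assert (Hy1 : Rabs y <= 1) by (pose proof (Rmin_l 1 eps); lra).
    assert (Hy2 : Rabs y < eps) by (pose proof (Rmin_r 1 eps); lra).
    pose proof (rpow_le_sq y q Hq Hy1). pose proof (rpow_ge0 y q).
    rewrite Rabs_right by lra.
    assert (y ^ 2 = Rabs y * Rabs y) by (rewrite <- Rabs_mult; simpl; rewrite Rmult_1_r; rewrite Rabs_right; nra).
    pose proof (Rabs_pos y). nra.
  - apply (cont_ext_loc _ (fun y => Rpower y q) z z). lra.
    intros y Hy. apply rpow_pos. apply Rabs_lt_between' in Hy. lra.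
    apply continuity_pt_Rpower; lra.
Qed.

Lemma Qf_cont p z : 1 < p -> 0 <= z <= 1 -> continuity_pt (Qf p) z.
Proof.
  intros hp Hz. destruct (Req_dec z 1) as [->|Hne].
  - apply cont_eps. intros eps Heps.
    pose proof (derivable_pt_lim_power 1 (p+1) Rlt_0_1) as HD.
    destruct (HD eps Heps) as [del Hdel].
    exists (Rmin del (1/2)). split. apply Rmin_pos. apply cond_pos. lra.
    intros y Hy. rewrite Qf_1. destruct (Req_dec y 1) as [->|Hy1].
    + rewrite Qf_1. rewrite Rminus_eq_0, Rabs_R0. lra.
    + rewrite Qf_ne by auto.
      assert (Hyd : Rabs (y - 1) < del) by (pose proof (Rmin_l del (1/2)); lra).
      assert (Hyh : Rabs (y - 1) < 1/2) by (pose proof (Rmin_r del (1/2)); lra).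
      specialize (Hdel (y - 1)). replace (1 + (y - 1)) with y in Hdel by ring.
      rewrite !Rpower_1_base in Hdel. rewrite Rmult_1_r in Hdel.
      apply Rabs_lt_between' in Hyh.
      rewrite rpow_pos by lra.
      replace ((1 - Rpower y (p + 1)) / (1 - y)) with ((Rpower y (p + 1) - 1) / (y - 1)).
      apply Hdel. lra. exact Hyd.
      field. split; lra.
  - apply (cont_ext_loc _ (fun y => (1 - rpow y (p + 1)) / (1 - y)) z (1 - z)). lra.
    intros y Hy. apply Rabs_lt_between' in Hy. apply Qf_ne. lra.
    apply continuity_pt_div.
    + apply continuity_pt_minus. apply continuity_pt_const. intros a b; reflexivity.
      apply rpow_cont; lra.
    + apply continuity_pt_minus. apply continuity_pt_const. intros a b; reflexivity.
      apply continuity_pt_id.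
    + lra.
Qed.


Lemma locally_R (x : R) (P : R -> Prop) d : 0 < d ->
  (forall y, Rabs (y - x) < d -> P y) -> locally x P.
Proof. intros Hd H. exists (mkposreal d Hd). intros y Hy. apply H. exact Hy. Qed.

Lemma locally_R_inv (x : R) (P : R -> Prop) : locally x P ->
  exists d, 0 < d /\ forall y, Rabs (y - x) < d -> P y.
Proof. intros [eps H]. exists eps. split. apply cond_pos. intros y Hy. apply H. exact Hy. Qed.

Lemma cont_pt_to (f : R -> R) x : continuity_pt f x -> continuous f x.
Proof. intros H. now apply continuity_pt_filterlim. Qed.

Lemma cont2_v (f : R -> R) e t : continuity_pt f t -> continuity_2d_pt (fun _ v => f v) e t.
Proof. intros H. apply (continuity_1d_2d_pt_comp f (fun _ v => v)). exact H. apply continuity_2d_pt_id2. Qed.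

Lemma cont2_z (f : R -> R) e t : continuity_pt f e -> continuity_2d_pt (fun z _ => f z) e t.
Proof. intros H. apply (continuity_1d_2d_pt_comp f (fun z _ => z)). exact H. apply continuity_2d_pt_id1. Qed.

Definition aa (p : R) := 2 / (p + 1).
Definition Df (p e u : R) := 2 - u ^ 2 + aa p * e * Qf p (1 - u ^ 2).
Fixpoint cn (n : nat) : R := match n with O => 1 | S m => cn m * (-1/2 - INR m) end.
Definition Wf (p : R) (n : nat) (u : R) := 2 * cn n * (aa p * Qf p (1 - u ^ 2)) ^ n.
Definition fam (p : R) (n : nat) (e u : R) := Wf p n u * Rpower (Df p e u) (-1/2 - INR n).
Definition Lam (p : R) (n : nat) (e : R) := 4 * RInt (fam p n e) 0 1.

Lemma aa_pos p : 1 < p -> 0 < aa p.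
Proof. intros. unfold aa. apply Rdiv_lt_0_compat; lra. Qed.

Lemma aaQ_bounds p u : 1 < p -> 0 <= aa p * Qf p (1 - u ^ 2) <= 2.
Proof.
  intros hp. pose proof (Qf_bounds p (1 - u^2) hp) as HQ.
  assert (0 <= u^2) by (simpl; nra). specialize (HQ ltac:(lra)).
  pose proof (aa_pos p hp).
  assert (aa p * (p + 1) = 2) by (unfold aa; field; lra).
  split. nra. nra.
Qed.

Lemma Df_pos p e u : 1 < p -> -1/8 < e -> u ^ 2 <= 3/2 -> 0 < Df p e u.
Proof.
  intros hp He Hu. unfold Df. pose proof (aaQ_bounds p u hp).
  set (w := aa p * Qf p (1 - u ^ 2)) in *.
  replace (aa p * e * Qf p (1 - u ^ 2)) with (e * w) by (unfold w; ring).
  destruct (Rle_dec 0 e); nra.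
Qed.

Lemma Df_ge1 p e u : 1 < p -> 0 <= e -> u ^ 2 <= 1 -> 1 <= Df p e u.
Proof.
  intros hp He Hu. unfold Df. pose proof (aaQ_bounds p u hp).
  set (w := aa p * Qf p (1 - u ^ 2)) in *.
  replace (aa p * e * Qf p (1 - u ^ 2)) with (e * w) by (unfold w; ring). nra.
Qed.

Lemma fam_derive p n e u : 0 < Df p e u ->
  is_derive (fun z => fam p n z u) e (fam p (S n) e u).
Proof.
  intros HD. unfold fam.
  set (w := aa p * Qf p (1 - u ^ 2)).
  assert (Hlin : is_derive (fun z => Df p z u) e w).
  { unfold Df. fold w.
    apply (is_derive_ext (fun z => (2 - u^2) + w * z)).
    { intros t. unfold w. simpl. ring. }
    auto_derive. all: try exact I. all: try ring. }
  assert (Hc := is_derive_comp (fun y => Rpower y (-1/2 - INR n)) (fun z => Df p z u) e _ _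
                  (is_derive_Rpower (-1/2 - INR n) _ HD) Hlin).
  apply is_derive_scal with (k := Wf p n u) in Hc.
  replace (Wf p (S n) u * Rpower (Df p e u) (-1 / 2 - INR (S n)))
     with (scal (Wf p n u) (scal w ((-1 / 2 - INR n) * Rpower (Df p e u) (-1 / 2 - INR n - 1)))).
  exact Hc.
  rewrite S_INR. replace (-1 / 2 - (INR n + 1)) with (-1 / 2 - INR n - 1) by ring.
  unfold scal; cbn -[INR Rpower]; unfold mult; cbn -[INR Rpower].
  unfold Wf. fold w. cbn -[INR Rpower]. ring.
Qed.

Ltac cont_poly := apply (proj2 (continuity_pt_filterlim _ _));
  match goal with |- filterlim ?f (locally ?x) _ =>
    apply (ex_derive_continuous (K:=R_AbsRing) (V:=R_NormedModule) f x) end;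
  auto_derive; auto.

Lemma Qc_cont p t : 1 < p -> 0 <= t <= 1 -> continuity_pt (fun u => Qf p (1 - u ^ 2)) t.
Proof.
  intros hp Ht. change (continuity_pt (comp (Qf p) (fun u => 1 - u ^ 2)) t).
  apply continuity_pt_comp.
  cont_poly. apply Qf_cont; auto. nra.
Qed.

Lemma Wf_cont p n t : 1 < p -> 0 <= t <= 1 -> continuity_pt (Wf p n) t.
Proof.
  intros hp Ht. unfold Wf.
  change (continuity_pt (comp (fun x => 2 * cn n * (aa p * x) ^ n) (fun u => Qf p (1 - u ^ 2))) t).
  apply continuity_pt_comp.
  now apply Qc_cont. cont_poly.
Qed.

Lemma Df_cont2 p e t : 1 < p -> 0 <= t <= 1 -> continuity_2d_pt (Df p) e t.
Proof.
  intros hp Ht. unfold Df.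
  apply (continuity_2d_pt_plus (fun _ v => 2 - v ^ 2) (fun z v => aa p * z * Qf p (1 - v ^ 2))).
  apply cont2_v. cont_poly.
  apply (continuity_2d_pt_mult (fun z _ => aa p * z) (fun _ v => Qf p (1 - v ^ 2))).
  apply cont2_z. cont_poly. apply cont2_v. now apply Qc_cont.
Qed.

Lemma fam_cont2 p n e t : 1 < p -> -1/8 < e -> 0 <= t <= 1 -> continuity_2d_pt (fam p n) e t.
Proof.
  intros hp He Ht. unfold fam.
  apply (continuity_2d_pt_mult (fun _ v => Wf p n v) (fun z v => Rpower (Df p z v) (-1/2 - INR n))).
  apply cont2_v. now apply Wf_cont.
  apply (continuity_1d_2d_pt_comp (fun x => Rpower x (-1/2 - INR n)) (Df p)).
  apply continuity_pt_Rpower. apply Df_pos; auto. nra.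
  now apply Df_cont2.
Qed.

Lemma fam_cont1 p n e t : 1 < p -> -1/8 < e -> 0 <= t <= 1 -> continuous (fam p n e) t.
Proof.
  intros hp He Ht. apply cont_pt_to. unfold fam.
  apply continuity_pt_mult. now apply Wf_cont.
  change (continuity_pt (comp (fun x => Rpower x (-1/2 - INR n)) (Df p e)) t).
  apply continuity_pt_comp.
  unfold Df. apply continuity_pt_plus. cont_poly.
  apply continuity_pt_mult. apply continuity_pt_const. intros a b; reflexivity.
  now apply Qc_cont.
  apply continuity_pt_Rpower. apply Df_pos; auto. nra.
Qed.

Lemma fam_ex_RInt p n e : 1 < p -> -1/8 < e -> ex_RInt (fam p n e) 0 1.
Proof.
  intros hp He. apply (ex_RInt_continuous (V:=R_CompleteNormedModule)). intros z Hz.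
  rewrite Rmin_left, Rmax_right in Hz by lra. now apply fam_cont1.
Qed.

Lemma Lam_derive p n e : 1 < p -> -1/8 < e -> is_derive (Lam p n) e (Lam p (S n) e).
Proof.
  intros hp He. unfold Lam.
  apply is_derive_scal.
  assert (H := is_derive_RInt_param (fam p n) 0 1 e).
  rewrite Rmin_left, Rmax_right in H by lra.
  assert (Hd : forall e' v, -1/8 < e' -> Rabs v <= 11/10 ->
     Derive (fun z => fam p n z v) e' = fam p (S n) e' v).
  { intros e' v He' Hv. apply is_derive_unique. apply fam_derive. apply Df_pos; auto.
    assert (v^2 = Rabs v * Rabs v) by (rewrite <- Rabs_mult; simpl; rewrite Rmult_1_r; rewrite Rabs_right; nra).
    pose proof (Rabs_pos v). nra. }
  assert (HR : RInt (fun t => Derive (fun u => fam p n u t) e) 0 1 = RInt (fam p (S n) e) 0 1).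
  { apply RInt_ext. intros x Hx. rewrite Rmin_left, Rmax_right in Hx by lra.
    apply Hd. lra. rewrite Rabs_right; lra. }
  rewrite <- HR. apply H.
  - apply (locally_R _ _ (e + 1/8)). lra. intros y Hy t Ht. eexists. apply fam_derive.
    apply Df_pos; auto. apply Rabs_lt_between' in Hy. lra. nra.
  - intros t Ht.
    apply (continuity_2d_pt_ext_loc (fam p (S n))).
    + assert (Hpos : 0 < Rmin (e + 1/8) (1/10)) by (apply Rmin_pos; lra).
      exists (mkposreal _ Hpos).
      intros u v Hu Hv. simpl in Hu, Hv. symmetry. apply Hd.
      pose proof (Rmin_l (e + 1/8) (1/10)). apply Rabs_lt_between' in Hu. lra.
      pose proof (Rmin_r (e + 1/8) (1/10)). apply Rabs_lt_between' in Hv.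
      apply Rabs_le. lra.
    + apply fam_cont2; auto.
  - apply (locally_R _ _ (e + 1/8)). lra. intros y Hy. apply fam_ex_RInt. auto.
    apply Rabs_lt_between' in Hy. lra.
Qed.


Lemma Rpower_mhalf x : 0 < x -> Rpower x (-1/2) = / sqrt x.
Proof.
  intros Hx. replace (-1/2) with (- (/2)) by field. rewrite Rpower_Ropp, Rpower_sqrt; auto.
Qed.

Lemma is_derive_asin x : -1 < x < 1 -> is_derive asin x (1 / sqrt (1 - x²)).
Proof.
  intros Hx. apply is_derive_Reals. rewrite <- (derive_pt_asin x Hx).
  destruct (derivable_pt_asin x Hx) as [l Hl] eqn:E. simpl. exact Hl.
Qed.

Lemma sqrt2_gt1 : 1 < sqrt 2.
Proof. rewrite <- sqrt_1. apply sqrt_lt_1; lra. Qed.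



Lemma fam00 p u : u ^ 2 < 2 -> fam p 0 0 u = 2 * / sqrt (2 - u ^ 2).
Proof.
  intros Hu. unfold fam, Wf, Df. simpl cn. rewrite pow_O. simpl INR.
  replace (2 - u ^ 2 + aa p * 0 * Qf p (1 - u ^ 2)) with (2 - u^2) by ring.
  replace (-1/2 - 0) with (-1/2) by ring.
  rewrite Rpower_mhalf by lra. ring.
Qed.

Lemma Lam00 p : 1 < p -> Lam p 0 0 = 2 * PI.
Proof.
  intros hp. unfold Lam.
  assert (H : is_RInt (fam p 0 0) 0 1 (minus ((fun u => 2 * asin (u / sqrt 2)) 1) ((fun u => 2 * asin (u / sqrt 2)) 0))).
  { apply (is_RInt_derive (V:=R_CompleteNormedModule) (fun u => 2 * asin (u / sqrt 2))).
    - intros x Hx. rewrite Rmin_left, Rmax_right in Hx by lra.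
      pose proof sqrt2_gt1 as Hs.
      assert (Hx2 : -1 < x / sqrt 2 < 1).
      { split. apply (Rlt_le_trans _ 0). lra. apply Rcomplements.Rdiv_le_0_compat; lra.
        apply Rcomplements.Rlt_div_l; lra. }
      assert (Hd := is_derive_comp asin (fun u => u / sqrt 2) x _ (/ sqrt 2) (is_derive_asin _ Hx2)).
      assert (Hl : is_derive (fun u : R => u / sqrt 2) x (/ sqrt 2)).
      { auto_derive. lra. ring. }
      specialize (Hd Hl). apply is_derive_scal with (k := 2) in Hd.
      replace (fam p 0 0 x) with (2 * scal (/ sqrt 2) (1 / sqrt (1 - (x / sqrt 2)²))).
      exact Hd.
      rewrite fam00 by nra. unfold scal; simpl; unfold mult; simpl.
      assert (Hsq : sqrt (2 - x ^ 2) = sqrt 2 * sqrt (1 - (x / sqrt 2)²)).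
      { rewrite <- sqrt_mult_alt by lra. f_equal. unfold Rsqr.
        field_simplify. rewrite pow2_sqrt by lra. field. lra. }
      assert (0 < sqrt (1 - (x / sqrt 2)²)).
      { apply sqrt_lt_R0. unfold Rsqr. destruct Hx2. nra. }
      replace (x * (x * 1)) with (x ^ 2) by ring. rewrite Hsq. field. lra.
    - intros x Hx. rewrite Rmin_left, Rmax_right in Hx by lra. apply fam_cont1; lra. }
  apply (is_RInt_unique (V:=R_CompleteNormedModule)) in H. rewrite H. simpl. unfold minus, plus, opp; simpl.
  replace (1 / sqrt 2) with (/ sqrt 2) by (field; pose proof sqrt2_gt1; lra).
  rewrite asin_inv_sqrt2. replace (0 / sqrt 2) with 0 by (field; pose proof sqrt2_gt1; lra). rewrite asin_0. field.
Qed.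

Lemma Rpower_neg_antimono r x y : r <= 0 -> 0 < x <= y -> Rpower y r <= Rpower x r.
Proof.
  intros Hr Hxy. replace r with (- (- r)) by ring. rewrite (Rpower_Ropp y (-r)), (Rpower_Ropp x (-r)).
  apply Rinv_le_contravar. apply Rpower_pos. apply Rle_Rpower_l; lra.
Qed.

Lemma Rpower_neg_le1 r x : r <= 0 -> 1 <= x -> Rpower x r <= 1.
Proof.
  intros Hr Hx. rewrite <- (Rpower_O x) by lra. apply Rle_Rpower; lra.
Qed.

Lemma w_bounds p u : 1 < p -> 0 <= u <= 1 -> aa p <= aa p * Qf p (1 - u ^ 2) <= 2.
Proof.
  intros hp Hu. split.
  - pose proof (Qf_ge1 p (1 - u^2) hp ltac:(nra)). pose proof (aa_pos p hp). nra.
  - apply aaQ_bounds; auto.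
Qed.

Lemma Df_le p e u : 1 < p -> 0 <= e -> 0 <= u <= 1 -> Df p e u <= 2 + 2 * e.
Proof.
  intros hp He Hu. unfold Df. pose proof (w_bounds p u hp Hu).
  replace (aa p * e * Qf p (1 - u ^ 2)) with (e * (aa p * Qf p (1 - u ^ 2))) by ring. nra.
Qed.

Lemma Df_ge p e u : 1 < p -> 0 <= e -> 0 <= u <= 1 -> 1 + aa p * e <= Df p e u.
Proof.
  intros hp He Hu. unfold Df. pose proof (w_bounds p u hp Hu).
  replace (aa p * e * Qf p (1 - u ^ 2)) with (e * (aa p * Qf p (1 - u ^ 2))) by ring. nra.
Qed.

Lemma fam0_eq p e u : fam p 0 e u = 2 * Rpower (Df p e u) (-1/2).
Proof. unfold fam, Wf. simpl. replace (-1/2 - 0) with (-1/2) by field. ring. Qed.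

Lemma fam1_eq p e u : fam p 1 e u = - (aa p * Qf p (1 - u ^ 2)) * Rpower (Df p e u) (-3/2).
Proof. unfold fam, Wf. simpl. replace (-1/2 - 1) with (-3/2) by field. field. Qed.

Lemma fam2_eq p e u : fam p 2 e u = 3/2 * (aa p * Qf p (1 - u ^ 2)) ^ 2 * Rpower (Df p e u) (-5/2).
Proof. unfold fam, Wf. simpl. replace (-1/2 - (1 + 1)) with (-5/2) by field. field. Qed.

Lemma Lam0_pos p e : 1 < p -> 0 <= e -> 0 < Lam p 0 e.
Proof.
  intros hp He. unfold Lam.
  assert (H : RInt (fun _ => 2 * Rpower (2 + 2 * e) (-1/2)) 0 1 <= RInt (fam p 0 e) 0 1).
  { apply RInt_le. lra. apply ex_RInt_const. apply fam_ex_RInt; lra.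
    intros x Hx. rewrite fam0_eq.
    assert (1 <= Df p e x) by (apply Df_ge1; auto; nra).
    pose proof (Df_le p e x hp He ltac:(lra)).
    pose proof (Rpower_neg_antimono (-1/2) (Df p e x) (2 + 2 * e) ltac:(lra) ltac:(lra)). lra. }
  rewrite RInt_const in H. unfold scal in H; simpl in H; unfold mult in H; simpl in H.
  pose proof (Rpower_pos (2 + 2 * e) (-1/2)). nra.
Qed.

Lemma Lam0_upper p e : 1 < p -> 0 <= e -> Lam p 0 e <= 8 * Rpower (1 + aa p * e) (-1/2).
Proof.
  intros hp He. unfold Lam.
  assert (H : RInt (fam p 0 e) 0 1 <= RInt (fun _ => 2 * Rpower (1 + aa p * e) (-1/2)) 0 1).
  { apply RInt_le. lra. apply fam_ex_RInt; lra. apply ex_RInt_const.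
    intros x Hx. rewrite fam0_eq.
    pose proof (Df_ge p e x hp He ltac:(lra)). pose proof (aa_pos p hp).
    pose proof (Rpower_neg_antimono (-1/2) (1 + aa p * e) (Df p e x) ltac:(lra) ltac:(nra)). lra. }
  rewrite RInt_const in H. unfold scal in H; simpl in H; unfold mult in H; simpl in H.
  lra.
Qed.

Lemma Lam1_neg_bound p e : 1 < p -> 0 <= e -> Lam p 1 e <= - 4 * (aa p * Rpower (2 + 2 * e) (-3/2)).
Proof.
  intros hp He. unfold Lam.
  assert (H : RInt (fam p 1 e) 0 1 <= RInt (fun _ => - (aa p * Rpower (2 + 2 * e) (-3/2))) 0 1).
  { apply RInt_le. lra. apply fam_ex_RInt; lra. apply ex_RInt_const.
    intros x Hx. rewrite fam1_eq.
    assert (1 <= Df p e x) by (apply Df_ge1; auto; nra).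
    pose proof (Df_le p e x hp He ltac:(lra)).
    pose proof (w_bounds p x hp ltac:(lra)). pose proof (aa_pos p hp).
    pose proof (Rpower_neg_antimono (-3/2) (Df p e x) (2 + 2 * e) ltac:(lra) ltac:(lra)).
    pose proof (Rpower_pos (2 + 2 * e) (-3/2)).
    nra. }
  rewrite RInt_const in H. unfold scal in H; simpl in H; unfold mult in H; simpl in H.
  lra.
Qed.

Lemma Lam1_neg p e : 1 < p -> 0 <= e -> Lam p 1 e < 0.
Proof.
  intros hp He. pose proof (Lam1_neg_bound p e hp He). pose proof (aa_pos p hp).
  pose proof (Rpower_pos (2 + 2 * e) (-3/2)). nra.
Qed.

Lemma Lam2_bound p e : 1 < p -> 0 <= e -> Rabs (Lam p 2 e) <= 24.
Proof.
  intros hp He. unfold Lam. rewrite Rabs_mult, Rabs_right by lra.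
  assert (H : Rabs (RInt (fam p 2 e) 0 1) <= (1 - 0) * 6).
  { apply abs_RInt_le_const. lra. apply fam_ex_RInt; lra.
    intros t Ht. rewrite fam2_eq.
    assert (1 <= Df p e t) by (apply Df_ge1; auto; nra).
    pose proof (Rpower_neg_le1 (-5/2) (Df p e t) ltac:(lra) ltac:(lra)).
    pose proof (Rpower_pos (Df p e t) (-5/2)).
    pose proof (w_bounds p t hp Ht). pose proof (aa_pos p hp).
    rewrite Rabs_right. 2: { apply Rle_ge. apply Rmult_le_pos. apply Rmult_le_pos. lra. apply pow2_ge_0. lra. }
    set (w := aa p * Qf p (1 - t ^ 2)) in *. set (r := Rpower (Df p e t) (-5 / 2)) in *.
    assert (w ^ 2 <= 4) by (simpl; nra). nra. }
  lra.
Qed.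


Lemma rpow_comp_cont (B : R -> R) r z : continuity_pt B z -> 0 < B z ->
  continuity_pt (fun y => rpow (B y) r) z.
Proof.
  intros HB Hpos. destruct (cont_eps_inv B z HB (B z) Hpos) as [d [Hd Hy]].
  apply (cont_ext_loc _ (fun y => Rpower (B y) r) z d Hd).
  - intros y Hyz. apply rpow_pos. specialize (Hy y Hyz). apply Rabs_lt_between' in Hy. lra.
  - change (continuity_pt (comp (fun x => Rpower x r) B) z). apply continuity_pt_comp; auto.
    now apply continuity_pt_Rpower.
Qed.

Lemma sqrt_lt1 x : 0 <= x < 1 -> sqrt x < 1.
Proof. intros H. apply (Rlt_le_trans _ (sqrt 1)). apply sqrt_lt_1; lra. rewrite sqrt_1; lra. Qed.

Section Rep.
Variable p n : R.
Hypothesis hp : 1 < p.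
Hypothesis hn : 0 <= n.
Let e := rpow n (p - 1).
Let f := period_integrand p n.

Lemma e_ge0 : 0 <= e.
Proof. apply rpow_ge0. Qed.

Definition Bz (z : R) := 1 - z ^ 2 + aa p * e * (1 - rpow z (p + 1)).

Lemma f_eq z : f z = rpow (Bz z) (-1/2).
Proof. reflexivity. Qed.

Lemma Bz_eq z : Bz z = (1 - z) * (1 + z + aa p * e * Qf p z).
Proof. unfold Bz. rewrite Qf_eq. ring. Qed.

Lemma Bz_pos z : 0 <= z < 1 -> 0 < Bz z.
Proof.
  intros Hz. rewrite Bz_eq. apply Rmult_lt_0_compat. lra.
  pose proof (Qf_bounds p z hp ltac:(lra)). pose proof (aa_pos p hp). pose proof e_ge0.
  assert (0 <= aa p * e * Qf p z) by (apply Rmult_le_pos; [apply Rmult_le_pos|]; lra). lra.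
Qed.

Lemma f_cont z : 0 <= z < 1 -> continuous f z.
Proof.
  intros Hz. apply cont_pt_to. apply rpow_comp_cont; [|apply Bz_pos; auto].
  unfold Bz. apply continuity_pt_plus. cont_poly.
  apply continuity_pt_mult. apply continuity_pt_const. intros a b; reflexivity.
  apply continuity_pt_minus. apply continuity_pt_const. intros a b; reflexivity.
  apply rpow_cont; lra.
Qed.

Lemma f_sub u : 0 < u <= 1 -> scal (-2 * u) (f (1 - u ^ 2)) = - fam p 0 e u.
Proof.
  intros Hu. rewrite f_eq, fam0_eq.
  assert (HB : Bz (1 - u ^ 2) = u ^ 2 * Df p e u).
  { rewrite Bz_eq. unfold Df. ring. }
  assert (HD : 0 < Df p e u) by (apply Df_pos; auto; pose proof e_ge0; nra).
  rewrite HB. rewrite rpow_pos by (apply Rmult_lt_0_compat; nra).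
  rewrite <- Rpower_mult_distr by nra.
  rewrite (Rpower_mhalf (u ^ 2)) by nra. rewrite sqrt_pow2 by lra.
  unfold scal; simpl; unfold mult; simpl. field. lra.
Qed.

Lemma fam0_abs u : 0 <= u <= 1 -> Rabs (fam p 0 e u) <= 2.
Proof.
  intros Hu. rewrite fam0_eq. pose proof e_ge0.
  assert (1 <= Df p e u) by (apply Df_ge1; auto; nra).
  pose proof (Rpower_neg_le1 (-1/2) (Df p e u) ltac:(lra) ltac:(lra)).
  pose proof (Rpower_pos (Df p e u) (-1/2)). rewrite Rabs_right; lra.
Qed.

Lemma piece b : 0 < b < 1 -> is_RInt f 0 b (RInt (fam p 0 e) (sqrt (1 - b)) 1).
Proof.
  intros Hb. set (x0 := sqrt (1 - b)).
  assert (Hx0 : 0 < x0 < 1).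
  { unfold x0. split. apply sqrt_lt_R0; lra. apply sqrt_lt1; lra. }
  assert (Hx0b : 1 - x0 ^ 2 = b) by (unfold x0; rewrite pow2_sqrt; lra).
  assert (Hc := is_RInt_comp f (fun y => 1 - y ^ 2) (fun y => -2 * y) x0 1).
  rewrite Rmin_left, Rmax_right in Hc by lra.
  rewrite Hx0b in Hc. replace (1 - 1 ^ 2) with 0 in Hc by ring.
  assert (Hex : ex_RInt f b 0).
  { apply (ex_RInt_continuous (V:=R_CompleteNormedModule)). intros z Hz.
    rewrite Rmin_right, Rmax_left in Hz by lra. apply f_cont. lra. }
  assert (H1 : is_RInt (fam p 0 e) x0 1 (opp (RInt f b 0))).
  { apply (is_RInt_ext (fun y => opp (scal (-2 * y) (f (1 - y ^ 2))))).
    - intros x Hx. rewrite Rmin_left, Rmax_right in Hx by lra.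
      rewrite f_sub by lra. unfold opp; simpl. ring.
    - assert (Hc1 : forall x, x0 <= x <= 1 -> continuous f (1 - x ^ 2)).
      { intros x Hx. apply f_cont. split. assert (x ^ 2 <= 1) by (simpl; nra). lra. assert (0 < x ^ 2) by (apply pow_lt; lra). lra. }
      assert (Hc2 : forall x, x0 <= x <= 1 -> is_derive (fun y => 1 - y ^ 2) x (-2 * x) /\ continuous (fun y => -2 * y) x).
      { intros x Hx. split. auto_derive. exact I. ring.
        apply (ex_derive_continuous (K:=R_AbsRing) (V:=R_NormedModule) (fun y => -2 * y)).
        auto_derive. exact I. }
      specialize (Hc Hc1 Hc2).
      exact (is_RInt_opp (V:=R_NormedModule) _ _ _ _ Hc). }
  apply (is_RInt_unique (V:=R_CompleteNormedModule)) in H1. rewrite H1.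
  apply (is_RInt_swap (V:=R_NormedModule)). apply (RInt_correct (V:=R_CompleteNormedModule)). exact Hex.
Qed.

Lemma period_rep : 4 * RInt_gen f (at_point 0) (at_left 1) = Lam p 0 e.
Proof.
  unfold Lam. f_equal.
  apply (is_RInt_gen_unique (V:=R_CompleteNormedModule)).
  intros P [eps HP].
  set (eta := Rmin 1 (eps * eps / 4)).
  assert (Heta1 : eta <= 1) by apply Rmin_l.
  assert (Heta2 : eta <= eps * eps / 4) by apply Rmin_r.
  assert (Heta : 0 < eta) by (apply Rmin_pos; [lra| pose proof (cond_pos eps); nra]).
  apply (Filter_prod _ _ _ (fun a => a = 0) (fun b => 1 - eta < b < 1)).
  - reflexivity.
  - exists (mkposreal eta Heta). intros y Hy Hy1. simpl. change (Rabs (y - 1) < eta) in Hy.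
    apply Rabs_lt_between' in Hy. lra.
  - intros a b -> Hb. simpl.
    assert (Hb0 : 0 < b < 1) by lra.
    exists (RInt (fam p 0 e) (sqrt (1 - b)) 1). split. now apply piece.
    apply HP. change (Rabs (RInt (fam p 0 e) (sqrt (1 - b)) 1 - RInt (fam p 0 e) 0 1) < eps).
    set (x0 := sqrt (1 - b)).
    assert (Hx0 : 0 < x0 < 1).
    { unfold x0. split. apply sqrt_lt_R0; lra. apply sqrt_lt1; lra. }
    assert (Hch := RInt_Chasles (V:=R_CompleteNormedModule) (fam p 0 e) 0 x0 1).
    assert (Hex : forall a b, 0 <= a <= b -> b <= 1 -> ex_RInt (fam p 0 e) a b).
    { intros a0 b0 Ha Hb'. apply (ex_RInt_continuous (V:=R_CompleteNormedModule)). intros z Hz.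
      rewrite Rmin_left, Rmax_right in Hz by lra. apply fam_cont1; auto. pose proof e_ge0; lra. lra. }
    rewrite <- Hch by (apply Hex; lra).
    change (plus ?a ?b) with (a + b).
    replace (RInt (fam p 0 e) x0 1 - (RInt (fam p 0 e) 0 x0 + RInt (fam p 0 e) x0 1))
      with (- RInt (fam p 0 e) 0 x0) by ring.
    rewrite Rabs_Ropp.
    assert (Hle := abs_RInt_le_const (fam p 0 e) 0 x0 2 ltac:(lra) ltac:(apply Hex; lra)).
    assert (x0 < eps / 2).
    { unfold x0. assert (Hb2 : 1 - b < eps * eps / 4).
      { lra. }
      pose proof (cond_pos eps).
      replace (eps / 2) with (sqrt ((eps / 2) ^ 2)) by (rewrite sqrt_pow2; lra).
      apply sqrt_lt_1; nra. }
    assert (Rabs (RInt (fam p 0 e) 0 x0) <= (x0 - 0) * 2).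
    { apply Hle. intros t Ht. apply fam0_abs. lra. }
    lra.
Qed.

End Rep.

Lemma period_eq p N c : 1 < p -> 0 <= N c -> period p N c = Lam p 0 (rpow (N c) (p - 1)).
Proof. intros hp hn. unfold period. apply period_rep; auto. Qed.


Section Inverse.
Variables (L E : R -> R) (lo hi : R).
Hypothesis HLE : forall s, lo < s < hi -> L (E s) = s /\ 0 < E s.
Hypothesis Hdec : forall x y, 0 <= x < y -> L y < L x.

Lemma inv_cont s : lo < s < hi ->
  forall eta, 0 < eta -> exists d, 0 < d /\ forall s', Rabs (s' - s) < d -> Rabs (E s' - E s) < eta.
Proof.
  intros Hs eta Heta. destruct (HLE s Hs) as [HLs He].
  set (e := E s) in *. set (et := Rmin eta (e / 2)).
  assert (Het : 0 < et) by (apply Rmin_pos; lra).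
  assert (Het1 : et <= eta) by apply Rmin_l. assert (Het2 : et <= e / 2) by apply Rmin_r.
  assert (H1 : L (e + et) < s) by (rewrite <- HLs; apply Hdec; lra).
  assert (H2 : s < L (e - et)) by (rewrite <- HLs at 1; apply Hdec; lra).
  exists (Rmin (Rmin (s - L (e + et)) (L (e - et) - s)) (Rmin (s - lo) (hi - s))).
  split. repeat apply Rmin_pos; lra.
  intros s' Hs'. apply Rabs_lt_between' in Hs'.
  pose proof (Rmin_l (Rmin (s - L (e + et)) (L (e - et) - s)) (Rmin (s - lo) (hi - s))).
  pose proof (Rmin_r (Rmin (s - L (e + et)) (L (e - et) - s)) (Rmin (s - lo) (hi - s))).
  pose proof (Rmin_l (s - L (e + et)) (L (e - et) - s)).
  pose proof (Rmin_r (s - L (e + et)) (L (e - et) - s)).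
  pose proof (Rmin_l (s - lo) (hi - s)). pose proof (Rmin_r (s - lo) (hi - s)).
  destruct (HLE s' ltac:(lra)) as [HL' He'].
  apply Rabs_lt_between'. fold e. split.
  - destruct (Rle_lt_dec (E s') (e - et)) as [Hle|Hlt]; [|lra].
    exfalso. destruct (Req_dec (E s') (e - et)) as [Heq|Hne].
    + rewrite Heq in HL'. lra.
    + assert (L (e - et) < L (E s')) by (apply Hdec; lra). lra.
  - destruct (Rle_lt_dec (e + et) (E s')) as [Hle|Hlt]; [|lra].
    exfalso. destruct (Req_dec (E s') (e + et)) as [Heq|Hne].
    + rewrite Heq in HL'. lra.
    + assert (L (E s') < L (e + et)) by (apply Hdec; lra). lra.
Qed.

Lemma inv_derive s L' : lo < s < hi -> is_derive L (E s) L' -> L' <> 0 ->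
  is_derive E s (/ L').
Proof.
  intros Hs HD HL'. apply is_derive_Reals in HD. apply is_derive_Reals.
  destruct (HLE s Hs) as [HLs He].
  intros eps Heps. set (c := Rabs L').
  assert (Hc : 0 < c) by (apply Rabs_pos_lt; auto).
  set (eps' := Rmin (c / 2) (eps * c * c / 2)).
  assert (Heps1 : eps' <= c / 2) by apply Rmin_l.
  assert (Heps2 : eps' <= eps * c * c / 2) by apply Rmin_r.
  assert (Heps' : 0 < eps') by (apply Rmin_pos; [lra| unfold Rdiv; repeat apply Rmult_lt_0_compat; lra]).
  destruct (HD eps' Heps') as [d' Hd'].
  destruct (inv_cont s Hs d' (cond_pos d')) as [d1 [Hd1 Hc1]].
  assert (Hd2 : 0 < Rmin d1 (Rmin (s - lo) (hi - s))) by (repeat apply Rmin_pos; lra).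
  exists (mkposreal _ Hd2). intros h Hh0 Hh. simpl in Hh.
  pose proof (Rmin_l d1 (Rmin (s - lo) (hi - s))). pose proof (Rmin_r d1 (Rmin (s - lo) (hi - s))).
  pose proof (Rmin_l (s - lo) (hi - s)). pose proof (Rmin_r (s - lo) (hi - s)).
  assert (Hsh : lo < s + h < hi) by (apply Rabs_def2 in Hh; lra).
  destruct (HLE (s + h) Hsh) as [HLh Heh].
  set (k := E (s + h) - E s).
  assert (Hk : Rabs k < d') by (apply Hc1; replace (s + h - s) with h by ring; lra).
  assert (Hk0 : k <> 0).
  { intros Hk0. unfold k in Hk0. assert (E (s + h) = E s) by lra.
    apply Hh0. rewrite H3 in HLh. lra. }
  specialize (Hd' k Hk0 Hk). replace (E s + k) with (E (s + h)) in Hd' by (unfold k; ring).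
  rewrite HLh, HLs in Hd'. replace (s + h - s) with h in Hd' by ring.
  replace ((E (s + h) - E s) / h) with (k / h) by reflexivity.
  set (Q := h / k) in *.
  assert (HQ1 : Rabs (Q - L') < c / 2) by lra.
  assert (HQ2 : Rabs (Q - L') < eps * c * c / 2) by lra.
  assert (HQ : c / 2 < Rabs Q).
  { pose proof (Rabs_triang_inv L' Q). rewrite Rabs_minus_sym in HQ1. unfold c in *. lra. }
  assert (HQ0 : Q <> 0) by (intros E0; rewrite E0, Rabs_R0 in HQ; lra).
  replace (k / h - / L') with ((L' - Q) / (Q * L')) by (unfold Q; field; auto).
  unfold Rdiv. rewrite Rabs_mult, Rabs_Rinv, Rabs_mult by (apply Rmult_integral_contrapositive; auto).
  rewrite Rabs_minus_sym. fold c.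
  apply (Rmult_lt_reg_r (Rabs Q * c)). nra.
  rewrite Rmult_assoc, Rinv_l by nra. nra.
Qed.
End Inverse.


Section Bij.
Variable p : R.
Hypothesis hp : 1 < p.

Lemma Lam_cont n e : -1/8 < e -> continuity_pt (Lam p n) e.
Proof.
  intros He. apply continuity_pt_filterlim.
  apply (ex_derive_continuous (K:=R_AbsRing) (V:=R_NormedModule)).
  eexists. apply Lam_derive; auto.
Qed.

Lemma Lam0_decr x y : 0 <= x < y -> Lam p 0 y < Lam p 0 x.
Proof.
  intros Hxy.
  destruct (MVT_gen (Lam p 0) x y (Lam p 1)) as [c [Hc Heq]].
  - intros z Hz. rewrite Rmin_left, Rmax_right in Hz by lra. apply Lam_derive; auto. lra.
  - intros z Hz. rewrite Rmin_left, Rmax_right in Hz by lra. apply Lam_cont. lra.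
  - rewrite Rmin_left, Rmax_right in Hc by lra.
    pose proof (Lam1_neg p c hp ltac:(lra)). nra.
Qed.

Lemma Lam0_le2pi e : 0 <= e -> Lam p 0 e <= 2 * PI.
Proof.
  intros He. rewrite <- (Lam00 p hp). destruct (Req_dec e 0) as [->|H]. lra.
  left. apply Lam0_decr. lra.
Qed.

Lemma Lam0_inj x y : 0 <= x -> 0 <= y -> Lam p 0 x = Lam p 0 y -> x = y.
Proof.
  intros Hx Hy H. destruct (Rtotal_order x y) as [Hl|[He|Hg]]; auto.
  - pose proof (Lam0_decr x y ltac:(lra)). lra.
  - pose proof (Lam0_decr y x ltac:(lra)). lra.
Qed.

Lemma Lam0_surj s : 0 < s <= 2 * PI -> exists e, 0 <= e /\ Lam p 0 e = s.
Proof.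
  intros Hs. destruct (Req_dec s (2 * PI)) as [->|Hne].
  { exists 0. split. lra. apply Lam00; auto. }
  pose proof PI_RGT_0 as Hpi. pose proof PI_4 as Hpi4.
  pose proof (aa_pos p hp) as Ha.
  set (E1 := ((16 / s) ^ 2 - 1) / aa p).
  assert (H16 : 1 < 16 / s) by (apply Rcomplements.Rlt_div_r; lra).
  assert (HE1 : 0 < E1) by (unfold E1; apply Rdiv_lt_0_compat; [nra| lra]).
  assert (HL1 : Lam p 0 E1 < s).
  { pose proof (Lam0_upper p E1 hp ltac:(lra)) as Hu.
    replace (1 + aa p * E1) with ((16 / s) ^ 2) in Hu by (unfold E1; field; lra).
    rewrite Rpower_mhalf in Hu by nra. rewrite sqrt_pow2 in Hu by lra.
    replace (8 * / (16 / s)) with (s / 2) in Hu by (field; lra). lra. }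
  destruct (Ranalysis5.IVT_interv (fun e => s - Lam p 0 e) 0 E1) as [z [Hz Hz0]].
  - intros a Ha'. apply continuity_pt_minus. apply continuity_pt_const. intros u v; reflexivity.
    apply Lam_cont. lra.
  - exact HE1.
  - rewrite Lam00 by auto. lra.
  - lra.
  - exists z. split. lra. lra.
Qed.

Definition phi (x : R) := x ^ 2 + aa p * rpow x (p + 1).

Lemma phi_incr x y : 0 <= x < y -> phi x < phi y.
Proof.
  intros Hxy. unfold phi. pose proof (aa_pos p hp).
  assert (rpow x (p + 1) <= rpow y (p + 1)).
  { destruct (Req_dec x 0) as [->|Hx].
    - rewrite rpow_nonpos by lra. apply rpow_ge0.
    - rewrite !rpow_pos by lra. apply Rle_Rpower_l; lra. }
  nra.
Qed.

Lemma phi_inj x y : 0 <= x -> 0 <= y -> phi x = phi y -> x = y.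
Proof.
  intros Hx Hy H. destruct (Rtotal_order x y) as [Hl|[He|Hg]]; auto.
  - pose proof (phi_incr x y ltac:(lra)). lra.
  - pose proof (phi_incr y x ltac:(lra)). lra.
Qed.

Lemma rpow_rpow x a b : 0 <= x -> 0 < a -> rpow (rpow x a) b = rpow x (a * b).
Proof.
  intros Hx Ha. destruct (Req_dec x 0) as [->|Hx0].
  - rewrite !(rpow_nonpos 0) by lra. reflexivity.
  - rewrite (rpow_pos x a) by lra. rewrite rpow_pos by apply Rpower_pos.
    rewrite rpow_pos by lra. apply Rpower_mult.
Qed.

Lemma rpow_1 x : 0 <= x -> rpow x 1 = x.
Proof.
  intros Hx. destruct (Req_dec x 0) as [->|Hx0]. apply rpow_nonpos; lra.
  rewrite rpow_pos by lra. apply Rpower_1. lra.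
Qed.

Lemma rpow_inv1 x : 0 <= x -> rpow (rpow x (p - 1)) (1 / (p - 1)) = x.
Proof.
  intros Hx. rewrite rpow_rpow by (auto; lra). replace ((p - 1) * (1 / (p - 1))) with 1 by (field; lra).
  now apply rpow_1.
Qed.

Lemma rpow_inv2 x : 0 <= x -> rpow (rpow x (1 / (p - 1))) (p - 1) = x.
Proof.
  intros Hx. rewrite rpow_rpow by (auto; apply Rdiv_lt_0_compat; lra).
  replace ((1 / (p - 1)) * (p - 1)) with 1 by (field; lra). now apply rpow_1.
Qed.

End Bij.


Definition isopen (U : R -> Prop) := forall x, U x -> exists d, 0 < d /\ forall y, Rabs (y - x) < d -> U y.
Definition Cn (U : R -> Prop) (n : nat) (f : R -> R) :=
  forall k, (k <= n)%nat -> forall x, U x -> ex_derive_n f k x.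
Definition Cinf (U : R -> Prop) (f : R -> R) := forall n, Cn U n f.

Lemma open_loc U x (P : R -> Prop) : isopen U -> U x -> (forall y, U y -> P y) -> locally x P.
Proof.
  intros HU Hx HP. destruct (HU x Hx) as [d [Hd H]]. apply (locally_R x P d Hd). intros y Hy. auto.
Qed.

Lemma Derive_n_S_pt (f : R -> R) m y : Derive_n f (S m) y = Derive_n (Derive f) m y.
Proof.
  replace (S m) with (m + 1)%nat by lia. rewrite <- (Derive_n_comp f m 1 y). reflexivity.
Qed.

Lemma exdn_S_intro f n x : ex_derive f x -> ex_derive_n (Derive f) n x -> ex_derive_n f (S n) x.
Proof.
  intros H1 H2. destruct n. exact H1.
  simpl. simpl in H2. apply (ex_derive_ext (Derive_n (Derive f) n)).
  intros t. symmetry. apply Derive_n_S_pt. exact H2.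
Qed.

Lemma exdn_S_elim f n x : ex_derive_n f (S n) x -> ex_derive_n (Derive f) n x.
Proof.
  intros H. destruct n. exact I.
  simpl. simpl in H. apply (ex_derive_ext (Derive_n f (S n))).
  intros t. apply Derive_n_S_pt. exact H.
Qed.

Section CnTheory.
Variable U : R -> Prop.
Hypothesis HU : isopen U.

Lemma CnS_intro n f g : (forall x, U x -> is_derive f x (g x)) -> Cn U n g -> Cn U (S n) f.
Proof.
  intros Hd Hg k Hk x Hx. destruct k. exact I.
  apply exdn_S_intro. eexists; eauto.
  apply (ex_derive_n_ext_loc g). apply (open_loc U x); auto.
  intros y Hy. symmetry. apply is_derive_unique. auto.
  apply Hg; auto. lia.
Qed.

Lemma Cn_weaken n f : Cn U (S n) f -> Cn U n f.
Proof. intros H k Hk. apply H. lia. Qed.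

Lemma Cn_Derive n f : Cn U (S n) f -> Cn U n (Derive f).
Proof. intros H k Hk x Hx. apply exdn_S_elim. apply H; auto. lia. Qed.

Lemma Cn_ex_derive n f : Cn U (S n) f -> forall x, U x -> ex_derive f x.
Proof. intros H x Hx. apply (H 1%nat). lia. auto. Qed.

Lemma Cn_plus n f g : Cn U n f -> Cn U n g -> Cn U n (fun x => f x + g x).
Proof.
  intros Hf Hg k Hk x Hx. apply ex_derive_n_plus.
  - apply (open_loc U x); auto. intros y Hy j Hj. apply Hf; auto. lia.
  - apply (open_loc U x); auto. intros y Hy j Hj. apply Hg; auto. lia.
Qed.

Lemma Cn_scal n a f : Cn U n f -> Cn U n (fun x => a * f x).
Proof. intros Hf k Hk x Hx. apply ex_derive_n_scal_l. apply Hf; auto. Qed.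

Lemma Cn_const n a : Cn U n (fun _ => a).
Proof. intros k Hk x Hx. apply ex_derive_n_const. Qed.

Lemma Cn_mult n : forall f g, Cn U n f -> Cn U n g -> Cn U n (fun x => f x * g x).
Proof.
  induction n as [|n IH]; intros f g Hf Hg.
  - intros k Hk x Hx. replace k with 0%nat by lia. exact I.
  - apply (CnS_intro n _ (fun x => Derive f x * g x + f x * Derive g x)).
    + intros x Hx. destruct (Cn_ex_derive n f Hf x Hx) as [df Hdf].
      destruct (Cn_ex_derive n g Hg x Hx) as [dg Hdg].
      pose proof (is_derive_mult f g x df dg Hdf Hdg) as H.
      rewrite (is_derive_unique f x df Hdf), (is_derive_unique g x dg Hdg).
      apply H. intros; apply Rmult_comm.
    + apply Cn_plus. apply IH. now apply Cn_Derive. now apply Cn_weaken.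
      apply IH. now apply Cn_weaken. now apply Cn_Derive.
Qed.

Lemma Cn_inv n f : (forall x, U x -> f x <> 0) -> Cn U n f -> Cn U n (fun x => / f x).
Proof.
  intros Hnz. induction n as [|n IH]; intros Hf.
  - intros k Hk x Hx. replace k with 0%nat by lia. exact I.
  - apply (CnS_intro n _ (fun x => (-1) * (Derive f x * (/ f x * / f x)))).
    + intros x Hx. destruct (Cn_ex_derive n f Hf x Hx) as [df Hdf].
      pose proof (is_derive_inv f x df Hdf (Hnz x Hx)) as H.
      rewrite (is_derive_unique f x df Hdf).
      replace ((-1) * (df * (/ f x * / f x))) with (- df / f x ^ 2). exact H.
      field. auto.
    + apply Cn_scal. apply Cn_mult. now apply Cn_Derive.
      apply Cn_mult; apply IH; now apply Cn_weaken.
Qed.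

Lemma Cn_family (F : nat -> R -> R) :
  (forall m x, U x -> is_derive (F m) x (F (S m) x)) -> forall n m, Cn U n (F m).
Proof.
  intros HF n. induction n as [|n IH]; intros m.
  - intros k Hk x Hx. replace k with 0%nat by lia. exact I.
  - apply (CnS_intro n _ (F (S m))). auto. apply IH.
Qed.

Lemma Cinf_ext f g : (forall x, U x -> f x = g x) -> Cinf U f -> Cinf U g.
Proof.
  intros Hfg Hf n k Hk x Hx. apply (ex_derive_n_ext_loc f). apply (open_loc U x); auto.
  apply (Hf n); auto.
Qed.

End CnTheory.

Lemma Cinf_sub (U U' : R -> Prop) f : (forall x, U' x -> U x) -> Cinf U f -> Cinf U' f.
Proof. intros H Hf n k Hk x Hx. apply (Hf n); auto. Qed.

Section InvComp.
Variables (U W : R -> Prop) (E L1 : R -> R).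
Hypothesis HU : isopen U.
Hypothesis HW : isopen W.
Hypothesis HEW : forall x, U x -> W (E x).
Hypothesis HL1 : Cinf W L1.
Hypothesis HL1nz : forall e, W e -> L1 e <> 0.
Hypothesis HEd : forall x, U x -> is_derive E x (/ L1 (E x)).

Lemma Cn_invcomp n : forall h, Cinf W h -> Cn U n (fun x => h (E x)).
Proof.
  induction n as [|n IH]; intros h Hh.
  - intros k Hk x Hx. replace k with 0%nat by lia. exact I.
  - apply (CnS_intro U HU n _ (fun x => (fun e => Derive h e * / L1 e) (E x))).
    + intros x Hx. destruct (Cn_ex_derive W 0 h (Hh 1%nat) (E x) (HEW x Hx)) as [dh Hdh].
      pose proof (is_derive_comp h E x dh _ Hdh (HEd x Hx)) as H.
      rewrite (is_derive_unique h (E x) dh Hdh).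
      replace (dh * / L1 (E x)) with (scal (/ L1 (E x)) dh). exact H.
      unfold scal; simpl; unfold mult; simpl. ring.
    + apply (IH (fun e => Derive h e * / L1 e)). intros m. apply Cn_mult. auto. apply Cn_Derive. apply Hh.
      apply Cn_inv; auto.
Qed.

Lemma Cinf_invcomp h : Cinf W h -> Cinf U (fun x => h (E x)).
Proof. intros Hh n. apply Cn_invcomp. auto. Qed.
End InvComp.


Lemma abs_le_bt x y : Rabs x <= y -> - y <= x <= y.
Proof. intros H. pose proof (Rle_abs x). pose proof (Rle_abs (- x)). rewrite Rabs_Ropp in H1. lra. Qed.

Lemma exp_le x y : x <= y -> exp x <= exp y.
Proof. intros H. destruct (Req_dec x y) as [->|Hn]. lra. left. apply exp_increasing. lra. Qed.

Lemma ln_abs_le1 x : 1/2 <= x <= 3/2 -> Rabs (ln x) <= 1.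
Proof.
  intros Hx. pose proof (exp_ineq1 1 ltac:(lra)) as He.
  apply Rabs_le. split.
  - assert (H1 : ln (exp (Ropp 1)) < ln x).
    { apply ln_increasing. apply exp_pos.
      rewrite exp_Ropp. apply (Rlt_le_trans _ (1/2)); [|lra].
      apply (Rmult_lt_reg_r (exp 1)). apply exp_pos. rewrite Rinv_l by (pose proof (exp_pos 1); lra). lra. }
    rewrite ln_exp in H1. lra.
  - assert (H1 : ln x < ln (exp 1)) by (apply ln_increasing; lra).
    rewrite ln_exp in H1. lra.
Qed.

Lemma Rpower_bound x c : 1/2 <= x <= 3/2 -> Rpower x c <= exp (Rabs c).
Proof.
  intros Hx. unfold Rpower. apply exp_le. pose proof (ln_abs_le1 x Hx).
  assert (Rabs (c * ln x) <= Rabs c) by (rewrite Rabs_mult; pose proof (Rabs_pos c); pose proof (Rabs_pos (ln x)); nra).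
  apply abs_le_bt in H0. lra.
Qed.

Lemma Rpower_1r_bound g r : Rabs r <= 1/2 -> Rabs (Rpower (1 + r) g - 1) <= Rabs g * exp (Rabs (g - 1)) * Rabs r.
Proof.
  intros Hr. apply abs_le_bt in Hr.
  destruct (Req_dec r 0) as [->|Hr0].
  { rewrite Rplus_0_r, Rpower_1_base, Rminus_eq_0, !Rabs_R0, Rmult_0_r. lra. }
  destruct (MVT_gen (fun y => Rpower y g) 1 (1 + r) (fun y => g * Rpower y (g - 1))) as [c [Hc Heq]].
  - intros x Hx. apply is_derive_Rpower. unfold Rmin, Rmax in Hx; destruct (Rle_dec 1 (1 + r)); lra.
  - intros x Hx. apply continuity_pt_Rpower. unfold Rmin, Rmax in Hx; destruct (Rle_dec 1 (1 + r)); lra.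
  - rewrite Rpower_1_base in Heq. rewrite Heq.
    replace (1 + r - 1) with r by ring.
    assert (Hc' : 1/2 <= c <= 3/2).
    { unfold Rmin, Rmax in Hc. destruct (Rle_dec 1 (1 + r)); lra. }
    pose proof (Rpower_bound c (g - 1) Hc'). pose proof (Rpower_pos c (g - 1)).
    rewrite !Rabs_mult. rewrite (Rabs_right (Rpower c (g - 1))) by lra.
    apply Rmult_le_compat_r. apply Rabs_pos. apply Rmult_le_compat_l. apply Rabs_pos. lra.
Qed.

Definition AS (F : R -> R) (K a : R) : Prop :=
  exists C d, 0 <= C /\ 0 < d /\ d <= 1 /\
    forall s, 2 * PI - d < s < 2 * PI ->
      Rabs (F s - K * Rpower (2 * PI - s) a) <= C * (2 * PI - s) * Rpower (2 * PI - s) a.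

Lemma AS_eq F K a K' a' : AS F K a -> K = K' -> a = a' -> AS F K' a'.
Proof. intros H -> ->. exact H. Qed.

Lemma AS_ext F G K a : (exists d0, 0 < d0 /\ forall s, 2 * PI - d0 < s < 2 * PI -> F s = G s) ->
  AS F K a -> AS G K a.
Proof.
  intros [d0 [Hd0 Hfg]] [C [d [HC [Hd [Hd1 H]]]]].
  exists C, (Rmin d d0). split; [auto|]. split. apply Rmin_pos; lra. split.
  pose proof (Rmin_l d d0); lra.
  intros s Hs. pose proof (Rmin_l d d0). pose proof (Rmin_r d d0).
  rewrite <- Hfg by lra. apply H. lra.
Qed.

Lemma AS_plus F G K1 K2 a : AS F K1 a -> AS G K2 a -> AS (fun s => F s + G s) (K1 + K2) a.
Proof.
  intros [C1 [d1 [HC1 [Hd1 [Hd1' H1]]]]] [C2 [d2 [HC2 [Hd2 [Hd2' H2]]]]].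
  exists (C1 + C2), (Rmin d1 d2). split. lra. split. apply Rmin_pos; lra. split.
  pose proof (Rmin_l d1 d2); lra.
  intros s Hs. pose proof (Rmin_l d1 d2). pose proof (Rmin_r d1 d2).
  specialize (H1 s ltac:(lra)). specialize (H2 s ltac:(lra)).
  replace (F s + G s - (K1 + K2) * Rpower (2 * PI - s) a) with
    ((F s - K1 * Rpower (2 * PI - s) a) + (G s - K2 * Rpower (2 * PI - s) a)) by ring.
  eapply Rle_trans. apply Rabs_triang. lra.
Qed.

Lemma AS_scal F K a c : AS F K a -> AS (fun s => c * F s) (c * K) a.
Proof.
  intros [C [d [HC [Hd [Hd' H]]]]].
  exists (Rabs c * C), d. split. apply Rmult_le_pos; auto; apply Rabs_pos. split; auto. split; auto.
  intros s Hs. specialize (H s Hs).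
  replace (c * F s - c * K * Rpower (2 * PI - s) a) with (c * (F s - K * Rpower (2 * PI - s) a)) by ring.
  rewrite Rabs_mult. rewrite !Rmult_assoc. apply Rmult_le_compat_l. apply Rabs_pos.
  rewrite <- Rmult_assoc. exact H.
Qed.

Lemma AS_const K : AS (fun _ => K) K 0.
Proof.
  exists 0, 1. split. lra. split. lra. split. lra.
  intros s Hs. rewrite Rpower_O by lra. rewrite Rmult_1_r, Rminus_eq_0, Rabs_R0. lra.
Qed.

Lemma AS_mult F G K1 K2 a1 a2 : AS F K1 a1 -> AS G K2 a2 ->
  AS (fun s => F s * G s) (K1 * K2) (a1 + a2).
Proof.
  intros [C1 [d1 [HC1 [Hd1 [Hd1' H1]]]]] [C2 [d2 [HC2 [Hd2 [Hd2' H2]]]]].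
  exists (C1 * (Rabs K2 + C2) + Rabs K1 * C2), (Rmin d1 d2).
  split. pose proof (Rabs_pos K1); pose proof (Rabs_pos K2); nra.
  split. apply Rmin_pos; lra. split. pose proof (Rmin_l d1 d2); lra.
  intros s Hs. pose proof (Rmin_l d1 d2). pose proof (Rmin_r d1 d2).
  specialize (H1 s ltac:(lra)). specialize (H2 s ltac:(lra)).
  set (t := 2 * PI - s) in *. assert (Ht : 0 < t < 1) by (unfold t; lra).
  rewrite Rpower_plus.
  set (T1 := Rpower t a1) in *. set (T2 := Rpower t a2) in *.
  assert (HT1 : 0 < T1) by apply Rpower_pos. assert (HT2 : 0 < T2) by apply Rpower_pos.
  set (r1 := F s - K1 * T1) in *. set (r2 := G s - K2 * T2) in *.
  replace (F s) with (K1 * T1 + r1) by (unfold r1; ring).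
  replace (G s) with (K2 * T2 + r2) by (unfold r2; ring).
  replace ((K1 * T1 + r1) * (K2 * T2 + r2) - K1 * K2 * (T1 * T2)) with
    (r1 * (K2 * T2 + r2) + K1 * T1 * r2) by ring.
  eapply Rle_trans. apply Rabs_triang. rewrite !Rabs_mult.
  assert (HG : Rabs (K2 * T2 + r2) <= (Rabs K2 + C2) * T2).
  { eapply Rle_trans. apply Rabs_triang. rewrite Rabs_mult, (Rabs_right T2) by lra.
    assert (C2 * t * T2 <= C2 * T2) by (apply Rmult_le_compat_r; [lra| nra]). lra. }
  rewrite (Rabs_right T1) by lra.
  assert (E1 : Rabs r1 * Rabs (K2 * T2 + r2) <= C1 * t * T1 * ((Rabs K2 + C2) * T2)).
  { apply Rmult_le_compat; try apply Rabs_pos; auto. }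
  assert (E2 : Rabs K1 * T1 * Rabs r2 <= Rabs K1 * T1 * (C2 * t * T2)).
  { apply Rmult_le_compat_l. pose proof (Rabs_pos K1); nra. auto. }
  assert (E3 : C1 * t * T1 * ((Rabs K2 + C2) * T2) + Rabs K1 * T1 * (C2 * t * T2) =
     (C1 * (Rabs K2 + C2) + Rabs K1 * C2) * t * (T1 * T2)) by ring.
  lra.
Qed.

Lemma AS_shift F K a : AS F K a -> AS F 0 (a - 1).
Proof.
  intros [C [d [HC [Hd [Hd' H]]]]].
  exists (Rabs K + C), d. split. pose proof (Rabs_pos K); lra. split; auto. split; auto.
  intros s Hs. specialize (H s Hs).
  set (t := 2 * PI - s) in *. assert (Ht : 0 < t < 1) by (unfold t; lra).
  assert (HT : t * Rpower t (a - 1) = Rpower t a).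
  { replace a with (1 + (a - 1)) at 2 by ring. rewrite Rpower_plus, Rpower_1 by lra. reflexivity. }
  rewrite Rmult_0_l, Rminus_0_r. rewrite Rmult_assoc, HT.
  pose proof (Rpower_pos t a).
  assert (Htri : Rabs (F s) <= Rabs (K * Rpower t a) + Rabs (F s - K * Rpower t a)).
  { replace (F s) with (K * Rpower t a + (F s - K * Rpower t a)) at 1 by ring. apply Rabs_triang. }
  rewrite Rabs_mult, (Rabs_right (Rpower t a)) in Htri by lra.
  assert (C * t * Rpower t a <= C * Rpower t a) by (apply Rmult_le_compat_r; [lra|]; nra).
  lra.
Qed.

Lemma AS_bdd F : (exists B d, 0 < d /\ forall s, 2 * PI - d < s < 2 * PI -> Rabs (F s) <= B) ->
  AS F 0 (-1).
Proof.
  intros [B [d [Hd H]]].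
  exists (Rabs B), (Rmin d 1). split. apply Rabs_pos. split. apply Rmin_pos; lra. split. apply Rmin_r.
  intros s Hs. pose proof (Rmin_l d 1). pose proof (Rmin_r d 1).
  specialize (H s ltac:(lra)).
  set (t := 2 * PI - s) in *. assert (Ht : 0 < t < 1) by (unfold t; lra).
  rewrite Rmult_0_l, Rminus_0_r. rewrite Rmult_assoc.
  replace (t * Rpower t (-1)) with 1.
  pose proof (Rle_abs B). lra.
  unfold Rpower. replace (-1 * ln t) with (- ln t) by ring. rewrite exp_Ropp, exp_ln by lra. field. lra.
Qed.

Lemma AS_pow F K a g : 0 < K -> AS F K a ->
  AS (fun s => Rpower (F s) g) (Rpower K g) (a * g).
Proof.
  intros HK [C [d [HC [Hd [Hd' H]]]]].
  set (Lg := Rabs g * exp (Rabs (g - 1))).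
  assert (HLg : 0 <= Lg) by (unfold Lg; pose proof (exp_pos (Rabs (g - 1))); pose proof (Rabs_pos g); nra).
  set (d2 := Rmin d (K / (2 * C + 1))).
  assert (Hd2 : 0 < d2) by (apply Rmin_pos; [lra| apply Rdiv_lt_0_compat; lra]).
  assert (Hd2a : d2 <= d) by apply Rmin_l.
  assert (Hd2b : d2 <= K / (2 * C + 1)) by apply Rmin_r.
  exists (Rpower K g * Lg * C / K), d2. split.
  { unfold Rdiv. pose proof (Rpower_pos K g). apply Rmult_le_pos. apply Rmult_le_pos. nra. auto.
    left; apply Rinv_0_lt_compat; lra. }
  split; auto. split; [lra|].
  intros s Hs. specialize (H s ltac:(lra)).
  set (t := 2 * PI - s) in *. assert (Ht : 0 < t < 1) by (unfold t; lra).
  set (T := Rpower t a) in *. assert (HT : 0 < T) by apply Rpower_pos.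
  assert (HCt : C * t <= K / 2).
  { assert (t <= K / (2 * C + 1)) by (unfold t; lra).
    apply (Rmult_le_compat_l C) in H0; [|lra].
    assert (C * (K / (2 * C + 1)) <= K / 2).
    { unfold Rdiv. apply (Rmult_le_reg_r (2 * (2 * C + 1))). lra.
      replace (C * (K * / (2 * C + 1)) * (2 * (2 * C + 1))) with (2 * C * K) by (field; lra).
      replace (K * / 2 * (2 * (2 * C + 1))) with (K * (2 * C + 1)) by (field; lra). nra. }
    lra. }
  set (rho := (F s - K * T) / (K * T)).
  assert (Hrho : Rabs rho <= C / K * t).
  { unfold rho. unfold Rdiv. rewrite Rabs_mult, Rabs_inv, (Rabs_right (K * T)) by nra.
    apply (Rmult_le_reg_r (K * T)). nra.
    rewrite Rmult_assoc, Rinv_l by nra. replace (C * / K * t * (K * T)) with (C * t * T) by (field; lra).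
    lra. }
  assert (Hrho2 : Rabs rho <= 1/2).
  { eapply Rle_trans. exact Hrho. apply (Rmult_le_reg_r K). lra.
    replace (C / K * t * K) with (C * t) by (field; lra). lra. }
  assert (HF : F s = K * T * (1 + rho)) by (unfold rho; field; nra).
  assert (Hrp : 0 < 1 + rho) by (apply abs_le_bt in Hrho2; lra).
  rewrite HF. rewrite <- !Rpower_mult_distr by nra.
  unfold T. rewrite Rpower_mult.
  pose proof (Rpower_1r_bound g rho Hrho2) as HB. fold Lg in HB.
  set (P := Rpower K g * Rpower t (a * g)).
  assert (HP : 0 < P) by (unfold P; pose proof (Rpower_pos K g); pose proof (Rpower_pos t (a * g)); nra).
  replace (P * Rpower (1 + rho) g - P) with (P * (Rpower (1 + rho) g - 1)) by ring.
  rewrite Rabs_mult, (Rabs_right P) by lra.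
  apply (Rle_trans _ (P * (Lg * (C / K * t)))).
  apply Rmult_le_compat_l. lra. eapply Rle_trans. exact HB. apply Rmult_le_compat_l; auto.
  unfold P. right. field. lra.
Qed.

Lemma AS_final F K a : AS F K a -> asympt_left_2pi F K a.
Proof.
  intros [C [d [HC [Hd [Hd' H]]]]]. exists C, d. split; auto.
  intros s Hs. rewrite rpow_pos by lra. auto.
Qed.


Lemma AS_fext F G K a : (forall s, 0 < s < 2 * PI -> F s = G s) -> AS F K a -> AS G K a.
Proof.
  intros H. apply AS_ext. exists 1. split. lra. intros s Hs. apply H.
  pose proof PI2_3_2. split; lra.
Qed.

Lemma AS_opp F K a : AS F K a -> AS (fun s => - F s) (- K) a.
Proof.
  intros H. apply (AS_fext (fun s => (-1) * F s)). intros; ring.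
  apply (AS_eq _ ((-1) * K) a). apply AS_scal; auto. ring. reflexivity.
Qed.

Lemma AS_minus F G K1 K2 a : AS F K1 a -> AS G K2 a -> AS (fun s => F s - G s) (K1 - K2) a.
Proof.
  intros H1 H2. apply (AS_fext (fun s => F s + - G s)). intros; ring.
  apply (AS_eq _ (K1 + - K2) a). apply AS_plus; auto. apply AS_opp; auto. ring. reflexivity.
Qed.

Lemma is_derive_val (f : R -> R) (x l l' : R) : is_derive f x l -> l = l' -> is_derive f x l'.
Proof. intros H ->. exact H. Qed.

Lemma is_derive_mult_R (f h : R -> R) (x df dh : R) : is_derive f x df -> is_derive h x dh ->
  is_derive (fun y => f y * h y) x (df * h x + f x * dh).
Proof. intros Hf Hh. exact (is_derive_mult f h x df dh Hf Hh Rmult_comm). Qed.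

Lemma is_derive_comp_R (f h : R -> R) (x df dh : R) : is_derive f (h x) df -> is_derive h x dh ->
  is_derive (fun y => f (h y)) x (df * dh).
Proof.
  intros Hf Hh. eapply is_derive_val. exact (is_derive_comp f h x df dh Hf Hh).
  unfold scal; simpl; unfold mult; simpl. ring.
Qed.

Lemma is_derive_plus_R (f h : R -> R) (x df dh : R) : is_derive f x df -> is_derive h x dh ->
  is_derive (fun y => f y + h y) x (df + dh).
Proof. intros Hf Hh. exact (is_derive_plus f h x df dh Hf Hh). Qed.

Lemma is_derive_inv_R (f : R -> R) (x df : R) : is_derive f x df -> f x <> 0 ->
  is_derive (fun y => / f y) x (- df / f x ^ 2).
Proof. apply is_derive_inv. Qed.


Lemma is_derive_scal_R (f : R -> R) (x a df : R) : is_derive f x df -> is_derive (fun y => a * f y) x (a * df).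
Proof. apply is_derive_scal. Qed.

Section Asym.
Variables (E L1 L2 : R -> R) (k : R).
Hypothesis Hk : 0 < k.
Hypothesis HEpos : forall s, 0 < s < 2 * PI -> 0 < E s.
Hypothesis HEd : forall s, 0 < s < 2 * PI -> is_derive E s (/ L1 (E s)).
Hypothesis HL1d : forall e, 0 < e -> is_derive L1 e (L2 e).
Hypothesis HL1nz : forall e, 0 < e -> L1 e <> 0.
Hypothesis AE : AS E (/ k) 1.
Hypothesis AL1 : AS (fun s => / L1 (E s)) (- / k) 0.
Hypothesis AL2 : AS (fun s => L2 (E s)) 0 (-1).

Variables (H H1 H2 : R -> R) (h0 h1 g : R).
Hypothesis HHd : forall e, 0 < e -> is_derive H e (H1 e).
Hypothesis HH1d : forall e, 0 < e -> is_derive H1 e (H2 e).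
Hypothesis AH : AS (fun s => H (E s)) h0 0.
Hypothesis AH1 : AS (fun s => H1 (E s)) h1 0.
Hypothesis AH2 : AS (fun s => H2 (E s)) 0 (-1).

Definition P0 e := Rpower e g * H e.
Definition P1 e := g * Rpower e (g - 1) * H e + Rpower e g * H1 e.
Definition P2 e := g * (g - 1) * Rpower e (g - 2) * H e + 2 * g * Rpower e (g - 1) * H1 e
                   + Rpower e g * H2 e.

Lemma P0_derive e : 0 < e -> is_derive P0 e (P1 e).
Proof.
  intros He. unfold P0, P1. eapply is_derive_val.
  apply is_derive_mult_R. apply is_derive_Rpower; auto. apply HHd; auto.
  cbv beta. ring.
Qed.

Lemma P1_derive e : 0 < e -> is_derive P1 e (P2 e).
Proof.
  intros He. unfold P1, P2. eapply is_derive_val.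
  apply is_derive_plus_R. apply is_derive_mult_R. apply is_derive_scal_R.
  apply is_derive_Rpower; auto. apply HHd; auto.
  apply is_derive_mult_R. apply is_derive_Rpower; auto. apply HH1d; auto.
  cbv beta. replace (g - 1 - 1) with (g - 2) by ring. ring.
Qed.

Definition F0 s := P0 (E s).
Definition G1 s := P1 (E s) * / L1 (E s).
Definition G2 s := P2 (E s) * / L1 (E s) * / L1 (E s)
                   - P1 (E s) * L2 (E s) * / L1 (E s) * / L1 (E s) * / L1 (E s).

Lemma F0_derive s : 0 < s < 2 * PI -> is_derive F0 s (G1 s).
Proof.
  intros Hs. unfold F0, G1. apply is_derive_comp_R. apply P0_derive; auto. apply HEd; auto.
Qed.

Lemma G1_derive s : 0 < s < 2 * PI -> is_derive G1 s (G2 s).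
Proof.
  intros Hs. pose proof (HEpos s Hs) as He. pose proof (HL1nz (E s) He) as Hnz.
  unfold G1, G2. eapply is_derive_val.
  apply is_derive_mult_R. apply is_derive_comp_R. apply P1_derive; auto. apply HEd; auto.
  apply is_derive_inv_R. apply is_derive_comp_R. apply HL1d; auto. apply HEd; auto. auto.
  cbv beta. field. auto.
Qed.

Lemma Derive_F0 s : 0 < s < 2 * PI -> Derive F0 s = G1 s.
Proof. intros Hs. apply is_derive_unique. apply F0_derive; auto. Qed.

Lemma Derive2_F0 s : 0 < s < 2 * PI -> Derive_n F0 2 s = G2 s.
Proof.
  intros Hs. simpl. rewrite (Derive_ext_loc _ G1).
  apply is_derive_unique. apply G1_derive; auto.
  apply (locally_R _ _ (Rmin s (2 * PI - s))). apply Rmin_pos; lra.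
  intros y Hy. pose proof (Rmin_l s (2 * PI - s)). pose proof (Rmin_r s (2 * PI - s)).
  apply Rabs_lt_between' in Hy. apply Derive_F0. lra.
Qed.

Lemma Rpower_shift x c : 0 < x -> Rpower x c = Rpower x (c - 1) * x.
Proof. intros Hx. rewrite <- (Rpower_1 x) at 3 by lra. rewrite <- Rpower_plus. f_equal. ring. Qed.

Lemma Apow c : AS (fun s => Rpower (E s) c) (Rpower (/ k) c) (1 * c).
Proof. apply AS_pow. apply Rinv_0_lt_compat; auto. exact AE. Qed.

Lemma AS_P0 : AS F0 (h0 * Rpower (/ k) g) g.
Proof.
  apply (AS_fext (fun s => Rpower (E s) g * H (E s))). intros; reflexivity.
  eapply AS_eq. eapply AS_mult. apply Apow. apply AH. ring. ring.
Qed.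

Lemma AS_P1 : AS (fun s => P1 (E s)) (g * h0 * Rpower (/ k) (g - 1)) (g - 1).
Proof.
  assert (T1 : AS (fun s => g * (Rpower (E s) (g - 1) * H (E s))) (g * (Rpower (/ k) (g - 1) * h0)) (g - 1)).
  { eapply AS_eq. eapply AS_scal. eapply AS_mult. apply Apow. apply AH. reflexivity. ring. }
  assert (T2 : AS (fun s => Rpower (E s) g * H1 (E s)) 0 (g - 1)).
  { eapply AS_eq. eapply AS_shift. eapply AS_mult. apply Apow. apply AH1. reflexivity. ring. }
  apply (AS_fext (fun s => g * (Rpower (E s) (g - 1) * H (E s)) + Rpower (E s) g * H1 (E s))).
  intros; unfold P1; ring.
  eapply AS_eq. eapply AS_plus. exact T1. exact T2. ring. reflexivity.
Qed.

Lemma AS_P2 : AS (fun s => P2 (E s)) (g * (g - 1) * h0 * Rpower (/ k) (g - 2)) (g - 2).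
Proof.
  assert (T1 : AS (fun s => g * (g - 1) * (Rpower (E s) (g - 2) * H (E s)))
                  (g * (g - 1) * (Rpower (/ k) (g - 2) * h0)) (g - 2)).
  { eapply AS_eq. eapply AS_scal. eapply AS_mult. apply Apow. apply AH. reflexivity. ring. }
  assert (T2 : AS (fun s => 2 * g * (Rpower (E s) (g - 1) * H1 (E s))) 0 (g - 2)).
  { eapply AS_eq. eapply AS_shift. eapply AS_scal. eapply AS_mult. apply Apow. apply AH1. reflexivity. ring. }
  assert (T3 : AS (fun s => Rpower (E s) g * H2 (E s)) 0 (g - 2)).
  { eapply AS_eq. eapply AS_shift. eapply AS_mult. apply Apow. apply AH2. reflexivity. ring. }
  apply (AS_fext (fun s => g * (g - 1) * (Rpower (E s) (g - 2) * H (E s))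
     + 2 * g * (Rpower (E s) (g - 1) * H1 (E s)) + Rpower (E s) g * H2 (E s))).
  intros; unfold P2; ring.
  eapply AS_eq. eapply AS_plus. eapply AS_plus. exact T1. exact T2. exact T3. ring. reflexivity.
Qed.

Lemma AS_G1 : AS G1 (- (g * h0 * Rpower (/ k) g)) (g - 1).
Proof.
  unfold G1. eapply AS_eq. eapply AS_mult. apply AS_P1. apply AL1.
  rewrite (Rpower_shift (/ k) g) by (apply Rinv_0_lt_compat; auto). ring. ring.
Qed.

Lemma AS_G2 : AS G2 (g * (g - 1) * h0 * Rpower (/ k) g) (g - 2).
Proof.
  assert (A : AS (fun s => P2 (E s) * / L1 (E s) * / L1 (E s))
              (g * (g - 1) * h0 * Rpower (/ k) (g - 2) * (- / k) * (- / k)) (g - 2)).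
  { eapply AS_eq. eapply AS_mult. eapply AS_mult. apply AS_P2. apply AL1. apply AL1. reflexivity. ring. }
  assert (B : AS (fun s => P1 (E s) * L2 (E s) * / L1 (E s) * / L1 (E s) * / L1 (E s)) 0 (g - 2)).
  { eapply AS_eq. eapply AS_mult. eapply AS_mult. eapply AS_mult. eapply AS_mult.
    apply AS_P1. apply AL2. apply AL1. apply AL1. apply AL1. ring. ring. }
  unfold G2. eapply AS_eq. eapply AS_minus. exact A. exact B.
  assert (Hk' : 0 < / k) by (apply Rinv_0_lt_compat; auto).
  rewrite (Rpower_shift (/ k) g) by auto. rewrite (Rpower_shift (/ k) (g - 1)) by auto.
  replace (g - 1 - 1) with (g - 2) by ring. ring. reflexivity.
Qed.

End Asym.


Section Concrete.
Variables (p : R) (N M : R -> R).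
Hypothesis hp : 1 < p.
Hypothesis hN : forall c, 0 <= c -> 0 <= N c /\ N c ^ 2 + 2 / (p + 1) * rpow (N c) (p + 1) = c.
Hypothesis HM : forall s, 0 < s <= 2 * PI -> 0 <= M s /\ period p N (M s) = s.

Definition Ef s := rpow (N (M s)) (p - 1).

Lemma E_prop s : 0 < s <= 2 * PI -> 0 <= Ef s /\ Lam p 0 (Ef s) = s.
Proof.
  intros Hs. destruct (HM s Hs) as [HM0 HMp]. destruct (hN (M s) HM0) as [HN0 _].
  unfold Ef. split. apply rpow_ge0. rewrite <- (period_eq p N (M s) hp HN0). exact HMp.
Qed.

Lemma E_pos s : 0 < s < 2 * PI -> 0 < Ef s.
Proof.
  intros Hs. destruct (E_prop s ltac:(lra)) as [H0 H1].
  destruct (Req_dec (Ef s) 0) as [He|He]; [|lra].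
  rewrite He, Lam00 in H1 by auto. lra.
Qed.

Lemma E_derive s : 0 < s < 2 * PI -> is_derive Ef s (/ Lam p 1 (Ef s)).
Proof.
  intros Hs.
  apply (inv_derive (Lam p 0) Ef 0 (2 * PI)).
  - intros s' Hs'. split. apply E_prop; lra. apply E_pos; auto.
  - intros x y Hxy. apply Lam0_decr; auto.
  - auto.
  - apply Lam_derive; auto. pose proof (E_pos s Hs). lra.
  - apply Rlt_not_eq. apply Lam1_neg; auto. pose proof (E_pos s Hs). lra.
Qed.

Definition kk := - Lam p 1 0.

Lemma kk_pos : 0 < kk.
Proof. unfold kk. pose proof (Lam1_neg p 0 hp ltac:(lra)). lra. Qed.

Lemma L1_lip e : 0 <= e -> Rabs (Lam p 1 e + kk) <= 24 * e.
Proof.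
  intros He. unfold kk. destruct (Req_dec e 0) as [->|Hne].
  { replace (Lam p 1 0 + - Lam p 1 0) with 0 by ring. rewrite Rabs_R0. lra. }
  destruct (MVT_gen (Lam p 1) 0 e (Lam p 2)) as [c [Hc Heq]].
  - intros x Hx. rewrite Rmin_left, Rmax_right in Hx by lra. apply Lam_derive; auto. lra.
  - intros x Hx. rewrite Rmin_left, Rmax_right in Hx by lra. apply Lam_cont; auto. lra.
  - rewrite Rmin_left, Rmax_right in Hc by lra.
    replace (Lam p 1 e + - Lam p 1 0) with (Lam p 2 c * (e - 0)) by lra.
    rewrite Rabs_mult, (Rabs_right (e - 0)) by lra.
    pose proof (Lam2_bound p c hp ltac:(lra)). nra.
Qed.

Lemma L0_quad e : 0 <= e -> Rabs (kk * e - (2 * PI - Lam p 0 e)) <= 24 * (e * e).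
Proof.
  intros He. destruct (Req_dec e 0) as [->|Hne].
  { rewrite Lam00 by auto. replace (kk * 0 - (2 * PI - 2 * PI)) with 0 by ring. rewrite Rabs_R0. lra. }
  destruct (MVT_gen (fun x => Lam p 0 x + kk * x) 0 e (fun x => Lam p 1 x + kk)) as [c [Hc Heq]].
  - intros x Hx. rewrite Rmin_left, Rmax_right in Hx by lra.
    apply is_derive_plus_R. apply Lam_derive; auto. lra.
    eapply is_derive_val. apply is_derive_scal_R. apply (is_derive_id (K:=R_AbsRing)).
    unfold one; simpl. ring.
  - intros x Hx. rewrite Rmin_left, Rmax_right in Hx by lra.
    apply continuity_pt_plus. apply Lam_cont; auto. lra.
    apply continuity_pt_mult. apply continuity_pt_const. intros u v; reflexivity. apply continuity_pt_id.
  - rewrite Rmin_left, Rmax_right in Hc by lra.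
    rewrite Lam00 in Heq by auto.
    replace (kk * e - (2 * PI - Lam p 0 e)) with ((Lam p 1 c + kk) * (e - 0)) by lra.
    rewrite Rabs_mult, (Rabs_right (e - 0)) by lra.
    pose proof (L1_lip c ltac:(lra)). nra.
Qed.

Definition e0 := kk / 48.

Lemma e0_pos : 0 < e0.
Proof. unfold e0. pose proof kk_pos. lra. Qed.

Lemma region : exists d, 0 < d /\ d <= 1 /\ forall s, 2 * PI - d < s < 2 * PI ->
  0 < Ef s /\ Ef s < e0 /\ Ef s <= 2 * (2 * PI - s) / kk.
Proof.
  pose proof e0_pos as He0. pose proof kk_pos as Hk.
  assert (HL : Lam p 0 e0 < 2 * PI) by (rewrite <- (Lam00 p hp); apply Lam0_decr; auto; lra).
  exists (Rmin 1 (2 * PI - Lam p 0 e0)). split. apply Rmin_pos; lra. split. apply Rmin_l.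
  intros s Hs. pose proof (Rmin_l 1 (2 * PI - Lam p 0 e0)). pose proof (Rmin_r 1 (2 * PI - Lam p 0 e0)).
  pose proof PI2_3_2.
  assert (Hs' : 0 < s < 2 * PI) by lra.
  pose proof (E_pos s Hs') as HEp. destruct (E_prop s ltac:(lra)) as [_ HEs].
  assert (HEe0 : Ef s < e0).
  { destruct (Rlt_le_dec (Ef s) e0) as [Hl|Hle]; auto. exfalso.
    destruct (Req_dec (Ef s) e0) as [Heq|Hne].
    - rewrite Heq in HEs. lra.
    - assert (Lam p 0 (Ef s) < Lam p 0 e0) by (apply Lam0_decr; lra). lra. }
  split; auto. split; auto.
  pose proof (L0_quad (Ef s) ltac:(lra)) as Hq. rewrite HEs in Hq.
  apply abs_le_bt in Hq.
  assert (24 * (Ef s * Ef s) <= kk / 2 * Ef s).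
  { unfold e0 in HEe0. assert (24 * Ef s <= kk / 2) by lra. nra. }
  apply (Rmult_le_reg_r kk). auto. unfold Rdiv. rewrite Rmult_assoc, Rinv_l by lra. lra.
Qed.

Lemma AS_E : AS Ef (/ kk) 1.
Proof.
  destruct region as [d [Hd [Hd1 Hr]]]. pose proof kk_pos as Hk.
  exists (96 / kk ^ 3), d. split. apply Rlt_le, Rdiv_lt_0_compat; [lra| apply pow_lt; lra].
  split; auto. split; auto.
  intros s Hs. destruct (Hr s Hs) as [HE0 [HE1 HE2]].
  set (t := 2 * PI - s) in *. assert (Ht : 0 < t) by (unfold t; lra).
  rewrite Rpower_1 by lra.
  destruct (E_prop s ltac:(pose proof PI2_3_2; lra)) as [_ HEs].
  pose proof (L0_quad (Ef s) ltac:(lra)) as Hq. rewrite HEs in Hq. fold t in Hq.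
  replace (Ef s - / kk * t) with ((kk * Ef s - t) / kk) by (field; lra).
  unfold Rdiv. rewrite Rabs_mult, (Rabs_right (/ kk)) by (apply Rle_ge, Rlt_le, Rinv_0_lt_compat; lra).
  apply (Rle_trans _ (24 * (Ef s * Ef s) * / kk)).
  apply Rmult_le_compat_r. left; apply Rinv_0_lt_compat; lra. exact Hq.
  assert (Ef s * Ef s <= (2 * t / kk) * (2 * t / kk)) by (apply Rmult_le_compat; lra).
  apply (Rmult_le_reg_r kk). lra. rewrite Rmult_assoc, Rinv_l, Rmult_1_r by lra.
  replace (96 * / kk ^ 3 * t * t * kk) with (24 * ((2 * t / kk) * (2 * t / kk))) by (field; lra).
  lra.
Qed.

Lemma AS_L1 : AS (fun s => / Lam p 1 (Ef s)) (- / kk) 0.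
Proof.
  destruct region as [d [Hd [Hd1 Hr]]]. pose proof kk_pos as Hk.
  exists (96 / kk ^ 3), d. split. apply Rlt_le, Rdiv_lt_0_compat; [lra| apply pow_lt; lra].
  split; auto. split; auto.
  intros s Hs. destruct (Hr s Hs) as [HE0 [HE1 HE2]].
  set (t := 2 * PI - s) in *. assert (Ht : 0 < t) by (unfold t; lra).
  rewrite Rpower_O by lra. rewrite !Rmult_1_r.
  pose proof (L1_lip (Ef s) ltac:(lra)) as HL.
  set (L := Lam p 1 (Ef s)) in *.
  assert (HLb : L <= - kk / 2).
  { apply abs_le_bt in HL. unfold e0 in HE1. lra. }
  replace (/ L - - / kk) with ((L + kk) * / (L * kk)) by (field; lra).
  rewrite Rabs_mult, Rabs_inv, Rabs_mult, (Rabs_left L), (Rabs_right kk) by lra.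
  apply (Rle_trans _ (24 * Ef s * / (kk / 2 * kk))).
  apply Rmult_le_compat; try lra. apply Rabs_pos. left; apply Rinv_0_lt_compat; nra.
  apply Rinv_le_contravar. nra. nra.
  apply (Rle_trans _ (24 * (2 * t / kk) * / (kk / 2 * kk))).
  apply Rmult_le_compat_r. left; apply Rinv_0_lt_compat; nra. lra.
  right. field. lra.
Qed.

Lemma AS_L2 : AS (fun s => Lam p 2 (Ef s)) 0 (-1).
Proof.
  apply AS_bdd. destruct region as [d [Hd [Hd1 Hr]]]. exists 24, d. split; auto.
  intros s Hs. apply Lam2_bound; auto. destruct (Hr s Hs). lra.
Qed.

Lemma AS_Hgen (H : R -> R) h LH : 0 <= LH -> (forall e, 0 < e < e0 -> Rabs (H e - h) <= LH * e) ->
  AS (fun s => H (Ef s)) h 0.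
Proof.
  intros HLH HH. destruct region as [d [Hd [Hd1 Hr]]]. pose proof kk_pos as Hk.
  exists (2 * LH / kk), d. split. apply Rmult_le_pos. lra. left; apply Rinv_0_lt_compat; lra.
  split; auto. split; auto.
  intros s Hs. destruct (Hr s Hs) as [HE0 [HE1 HE2]].
  rewrite Rpower_O by lra. rewrite !Rmult_1_r.
  eapply Rle_trans. apply HH. lra.
  replace (2 * LH / kk * (2 * PI - s)) with (LH * (2 * (2 * PI - s) / kk)) by (field; lra).
  apply Rmult_le_compat_l; lra.
Qed.

Lemma AS_Hbdd (H : R -> R) B : (forall e, 0 < e < e0 -> Rabs (H e) <= B) ->
  AS (fun s => H (Ef s)) 0 (-1).
Proof.
  intros HH. apply AS_bdd. destruct region as [d [Hd [Hd1 Hr]]]. exists B, d. split; auto.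
  intros s Hs. destruct (Hr s Hs) as [HE0 [HE1 HE2]]. apply HH. lra.
Qed.

End Concrete.


Definition Ha p e := 1 + aa p * e.
Definition Ha1 p (e : R) := aa p.
Definition Ha2 (e : R) := 0.
Definition Hb p e := sqrt (1 + aa p * e).
Definition Hb1 p e := aa p / (2 * sqrt (1 + aa p * e)).
Definition Hb2 p e := - (aa p * aa p) / (4 * ((1 + aa p * e) * sqrt (1 + aa p * e))).

Lemma Rpower_2 x : 0 < x -> Rpower x 2 = x ^ 2.
Proof. intros Hx. rewrite <- Rpower_pow by auto. f_equal. Qed.

Section HFacts.
Variable p : R.
Hypothesis hp : 1 < p.

Lemma Ha_d e : 0 < e -> is_derive (Ha p) e (Ha1 p e).
Proof. intros He. unfold Ha, Ha1. auto_derive. exact I. ring. Qed.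

Lemma Ha1_d e : 0 < e -> is_derive (Ha1 p) e (Ha2 e).
Proof. intros He. unfold Ha1, Ha2. auto_derive. exact I. reflexivity. Qed.

Lemma Hb_d e : 0 < e -> is_derive (Hb p) e (Hb1 p e).
Proof.
  intros He. pose proof (aa_pos p hp). unfold Hb, Hb1. auto_derive. nra.
  assert (0 < sqrt (1 + aa p * e)) by (apply sqrt_lt_R0; nra). field. lra.
Qed.

Lemma Hb1_d e : 0 < e -> is_derive (Hb1 p) e (Hb2 p e).
Proof.
  intros He. pose proof (aa_pos p hp). unfold Hb1, Hb2. auto_derive.
  - split. nra. split; auto. assert (0 < sqrt (1 + aa p * e)) by (apply sqrt_lt_R0; nra). lra.
  - assert (0 < sqrt (1 + aa p * e)) by (apply sqrt_lt_R0; nra).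
    assert (Hs : sqrt (1 + aa p * e) * sqrt (1 + aa p * e) = 1 + aa p * e) by (apply sqrt_sqrt; nra).
    set (S := sqrt (1 + aa p * e)) in *. rewrite <- Hs. field. lra.
Qed.

Lemma sqrt_bounds x : 0 <= x -> 1 <= sqrt (1 + x) <= 1 + x / 2.
Proof.
  intros Hx. pose proof (sqrt_pos (1 + x)) as H0.
  assert (Hs : sqrt (1 + x) * sqrt (1 + x) = 1 + x) by (apply sqrt_sqrt; lra).
  split; nra.
Qed.
End HFacts.

Lemma part1 p N (hp : 1 < p)
  (hN : forall c, 0 <= c -> 0 <= N c /\ N c ^ 2 + 2 / (p + 1) * rpow (N c) (p + 1) = c) :
  forall c, 0 <= c -> 0 < period p N c <= 2 * PI.
Proof.
  intros c Hc. destruct (hN c Hc) as [HN0 _]. rewrite period_eq by auto.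
  split. apply Lam0_pos; auto. apply rpow_ge0. apply Lam0_le2pi; auto. apply rpow_ge0.
Qed.

Lemma part2 p N (hp : 1 < p)
  (hN : forall c, 0 <= c -> 0 <= N c /\ N c ^ 2 + 2 / (p + 1) * rpow (N c) (p + 1) = c) :
  forall s, 0 < s <= 2 * PI -> exists! c, 0 <= c /\ period p N c = s.
Proof.
  intros s Hs. destruct (Lam0_surj p hp s Hs) as [e [He HLe]].
  set (n := rpow e (1 / (p - 1))).
  assert (Hn : 0 <= n) by apply rpow_ge0.
  set (c := phi p n).
  assert (Hc : 0 <= c).
  { unfold c, phi. pose proof (aa_pos p hp). pose proof (rpow_ge0 n (p + 1)).
    assert (0 <= n ^ 2) by (simpl; nra). nra. }
  assert (HNc : N c = n).
  { destruct (hN c Hc) as [HN0 HNe]. apply (phi_inj p hp); auto.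
    all: unfold phi, aa; rewrite HNe; reflexivity. }
  exists c. split.
  - split; auto. rewrite period_eq by (auto; rewrite HNc; auto). rewrite HNc.
    unfold n. rewrite rpow_inv2 by auto. auto.
  - intros c' [Hc' Hp']. destruct (hN c' Hc') as [HN0' HNe'].
    rewrite period_eq in Hp' by auto.
    assert (Heq : rpow (N c') (p - 1) = e).
    { apply (Lam0_inj p hp). apply rpow_ge0. auto. lra. }
    assert (HN' : N c' = n).
    { unfold n. rewrite <- Heq. rewrite rpow_inv1 by auto. reflexivity. }
    rewrite <- HNe'. rewrite HN'. unfold c, phi, aa. reflexivity.
Qed.


Fixpoint cfa (c : R) (m : nat) : R := match m with O => 1 | S j => cfa c j * (c - INR j) end.
Definition rfam (c : R) (m : nat) (e : R) := cfa c m * Rpower e (c - INR m).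

Definition Wpos (e : R) := 0 < e.
Definition Upi (s : R) := 0 < s < 2 * PI.
Definition Vdom (e : R) := -1/8 < e.

Lemma Wpos_open : isopen Wpos.
Proof. intros x Hx. exists x. split. auto. intros y Hy. apply Rabs_lt_between' in Hy. unfold Wpos. lra. Qed.

Lemma Vdom_open : isopen Vdom.
Proof. intros x Hx. unfold Vdom in *. exists (x + 1/8). split. lra. intros y Hy. apply Rabs_lt_between' in Hy. lra. Qed.

Lemma Upi_open : isopen Upi.
Proof.
  intros x Hx. unfold Upi in *. exists (Rmin x (2 * PI - x)). split. apply Rmin_pos; lra.
  intros y Hy. apply Rabs_lt_between' in Hy. pose proof (Rmin_l x (2 * PI - x)). pose proof (Rmin_r x (2 * PI - x)). lra.
Qed.

Lemma Cinf_Rpower c : Cinf Wpos (fun e => Rpower e c).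
Proof.
  apply (Cinf_ext Wpos Wpos_open (rfam c 0)).
  { intros x Hx. unfold rfam. simpl. replace (c - 0) with c by ring. ring. }
  intros n. apply (Cn_family Wpos Wpos_open (rfam c)).
  intros m x Hx. unfold rfam. eapply is_derive_val. apply is_derive_scal_R. apply is_derive_Rpower. auto.
  simpl cfa. rewrite S_INR. replace (c - INR m - 1) with (c - (INR m + 1)) by ring. ring.
Qed.

Definition hfam (p : R) (m : nat) : R -> R :=
  match m with O => Ha p | 1%nat => fun _ => aa p | _ => fun _ => 0 end.

Lemma is_derive_cst (a x : R) : is_derive (fun _ => a) x 0.
Proof. auto_derive. exact I. reflexivity. Qed.

Lemma Cinf_Ha p : Cinf Wpos (Ha p).
Proof.
  intros n. apply (Cn_family Wpos Wpos_open (hfam p) ) with (m := 0%nat).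
  intros m x Hx. destruct m as [|[|m]]; simpl.
  - unfold Ha. auto_derive. exact I. ring.
  - apply is_derive_cst.
  - apply is_derive_cst.
Qed.

Lemma sqrt_Rpower x c : 0 < x -> sqrt (Rpower x c) = Rpower x (c / 2).
Proof.
  intros Hx. rewrite <- Rpower_sqrt by apply Rpower_pos. rewrite Rpower_mult. f_equal.
Qed.

Section Part3.
Variables (p : R) (N M : R -> R).
Hypothesis hp : 1 < p.
Hypothesis hN : forall c, 0 <= c -> 0 <= N c /\ N c ^ 2 + 2 / (p + 1) * rpow (N c) (p + 1) = c.
Hypothesis HM : forall s, 0 < s <= 2 * PI -> 0 <= M s /\ period p N (M s) = s.

Let E := Ef p N M.

Lemma Mform s : 0 < s < 2 * PI ->
  0 < N (M s) /\ E s = Rpower (N (M s)) (p - 1) /\ M s = N (M s) ^ 2 * (1 + aa p * E s).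
Proof.
  intros Hs. destruct (HM s ltac:(lra)) as [HM0 _]. destruct (hN (M s) HM0) as [Hn0 Hn].
  pose proof (E_pos p N M hp hN HM s Hs) as HE. fold E in HE. unfold E, Ef in *.
  set (n := N (M s)) in *.
  assert (Hnp : 0 < n).
  { destruct (Req_dec n 0) as [Hz|Hz]; [|lra]. rewrite Hz, rpow_nonpos in HE by lra. lra. }
  split; auto. rewrite rpow_pos by auto. split; auto.
  rewrite <- Hn. rewrite rpow_pos by auto. unfold aa.
  replace (p + 1) with (2 + (p - 1)) by ring. rewrite Rpower_plus, Rpower_2 by auto. ring.
Qed.

Lemma M_eq s : 0 < s < 2 * PI -> M s = F0 E (Ha p) (2 / (p - 1)) s.
Proof.
  intros Hs. destruct (Mform s Hs) as [Hn [HE HMs]]. unfold F0, P0, Ha.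
  rewrite HMs. f_equal. rewrite HE. rewrite Rpower_mult.
  replace ((p - 1) * (2 / (p - 1))) with 2 by (field; lra). rewrite Rpower_2 by auto. reflexivity.
Qed.

Lemma sqrtM_eq s : 0 < s < 2 * PI -> sqrt (M s) = F0 E (Hb p) (1 / (p - 1)) s.
Proof.
  intros Hs. destruct (Mform s Hs) as [Hn [HE HMs]]. unfold F0, P0, Hb.
  rewrite HMs. rewrite sqrt_mult_alt by (apply pow2_ge_0). rewrite sqrt_pow2 by lra. f_equal.
  rewrite HE. rewrite Rpower_mult.
  replace ((p - 1) * (1 / (p - 1))) with 1 by (field; lra). rewrite Rpower_1 by auto. reflexivity.
Qed.

Lemma loc_eq (F G : R -> R) s : 0 < s < 2 * PI -> (forall t, 0 < t < 2 * PI -> F t = G t) ->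
  locally s (fun t => F t = G t).
Proof.
  intros Hs H. apply (locally_R _ _ (Rmin s (2 * PI - s))). apply Rmin_pos; lra.
  intros y Hy. apply Rabs_lt_between' in Hy. pose proof (Rmin_l s (2 * PI - s)). pose proof (Rmin_r s (2 * PI - s)).
  apply H. lra.
Qed.

Lemma HEpos : forall s, 0 < s < 2 * PI -> 0 < E s.
Proof. apply E_pos; auto. Qed.
Lemma HEd : forall s, 0 < s < 2 * PI -> is_derive E s (/ Lam p 1 (E s)).
Proof. apply E_derive; auto. Qed.
Lemma HL1d : forall e, 0 < e -> is_derive (Lam p 1) e (Lam p 2 e).
Proof. intros e He. apply Lam_derive; auto. lra. Qed.
Lemma HL1nz : forall e, 0 < e -> Lam p 1 e <> 0.
Proof. intros e He. apply Rlt_not_eq. apply Lam1_neg; auto. lra. Qed.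

Lemma smooth : forall n s, 0 < s < 2 * PI -> ex_derive_n M n s.
Proof.
  intros n s Hs.
  assert (HC : Cinf Upi M).
  { apply (Cinf_ext Upi Upi_open (fun x => (fun e => Rpower e (2 / (p - 1)) * Ha p e) (E x))).
    { intros x Hx. rewrite M_eq by auto. reflexivity. }
    assert (H1 : forall x, Upi x -> Wpos (E x)) by (intros x Hx; apply HEpos; auto).
    assert (H2 : Cinf Wpos (Lam p 1)).
    { apply (Cinf_sub Vdom). intros x Hx. unfold Vdom, Wpos in *. lra.
      intros m. apply (Cn_family Vdom Vdom_open (fun j => Lam p (S j)) ) with (m := 0%nat).
      intros j x Hx. apply Lam_derive; auto. }
    assert (H3 : forall e, Wpos e -> Lam p 1 e <> 0) by (intros e He; apply HL1nz; auto).
    assert (H4 : forall x, Upi x -> is_derive E x (/ Lam p 1 (E x))) by (intros x Hx; apply HEd; auto).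
    assert (H5 : Cinf Wpos (fun e => Rpower e (2 / (p - 1)) * Ha p e)).
    { intros m. apply Cn_mult. apply Wpos_open. apply Cinf_Rpower. apply Cinf_Ha. }
    exact (Cinf_invcomp Upi Wpos E (Lam p 1) Upi_open Wpos_open H1 H2 H3 H4 _ H5). }
  apply (HC n n (le_n n) s Hs).
Qed.

End Part3.


Section Part3b.
Variables (p : R) (N M : R -> R).
Hypothesis hp : 1 < p.
Hypothesis hN : forall c, 0 <= c -> 0 <= N c /\ N c ^ 2 + 2 / (p + 1) * rpow (N c) (p + 1) = c.
Hypothesis HM : forall s, 0 < s <= 2 * PI -> 0 <= M s /\ period p N (M s) = s.

Let E := Ef p N M.
Let k := kk p.

Lemma AHa : AS (fun s => Ha p (E s)) 1 0.
Proof.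
  apply (AS_Hgen p N M hp hN HM (Ha p) 1 (aa p)). pose proof (aa_pos p hp); lra.
  intros e He. unfold Ha. replace (1 + aa p * e - 1) with (aa p * e) by ring.
  pose proof (aa_pos p hp). rewrite Rabs_right by nra. lra.
Qed.

Lemma AHa1 : AS (fun s => Ha1 p (E s)) (aa p) 0.
Proof.
  apply (AS_Hgen p N M hp hN HM (Ha1 p) (aa p) 0). lra.
  intros e He. unfold Ha1. rewrite Rminus_eq_0, Rabs_R0. lra.
Qed.

Lemma AHa2 : AS (fun s => Ha2 (E s)) 0 (-1).
Proof.
  apply (AS_Hbdd p N M hp hN HM Ha2 0). intros e He. unfold Ha2. rewrite Rabs_R0. lra.
Qed.

Lemma AHb : AS (fun s => Hb p (E s)) 1 0.
Proof.
  apply (AS_Hgen p N M hp hN HM (Hb p) 1 (aa p / 2)). pose proof (aa_pos p hp); lra.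
  intros e He. unfold Hb. pose proof (aa_pos p hp).
  pose proof (sqrt_bounds (aa p * e) ltac:(nra)).
  rewrite Rabs_right by lra. lra.
Qed.

Lemma AHb1 : AS (fun s => Hb1 p (E s)) (aa p / 2) 0.
Proof.
  apply (AS_Hgen p N M hp hN HM (Hb1 p) (aa p / 2) (aa p * aa p / 4)). pose proof (aa_pos p hp); nra.
  intros e He. unfold Hb1. pose proof (aa_pos p hp).
  pose proof (sqrt_bounds (aa p * e) ltac:(nra)).
  set (S := sqrt (1 + aa p * e)) in *.
  replace (aa p / (2 * S) - aa p / 2) with (- (aa p * (S - 1) / (2 * S))) by (field; lra).
  rewrite Rabs_Ropp. rewrite Rabs_right.
  2: { apply Rle_ge. unfold Rdiv. apply Rmult_le_pos. nra. left; apply Rinv_0_lt_compat; lra. }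
  apply (Rle_trans _ (aa p * (S - 1) / 2)).
  { unfold Rdiv. apply Rmult_le_compat_l. nra. apply Rinv_le_contravar; lra. }
  assert (aa p * (S - 1) <= aa p * (aa p * e / 2)) by (apply Rmult_le_compat_l; lra).
  lra.
Qed.

Lemma AHb2 : AS (fun s => Hb2 p (E s)) 0 (-1).
Proof.
  apply (AS_Hbdd p N M hp hN HM (Hb2 p) (aa p * aa p / 4)). intros e He. unfold Hb2.
  pose proof (aa_pos p hp).
  pose proof (sqrt_bounds (aa p * e) ltac:(nra)).
  set (S := sqrt (1 + aa p * e)) in *.
  assert (HD : 1 <= (1 + aa p * e) * S) by nra.
  unfold Rdiv. rewrite Rabs_mult, Rabs_Ropp, Rabs_right, Rabs_inv, Rabs_right by nra.
  apply (Rle_trans _ (aa p * aa p * / 4)). apply Rmult_le_compat_l. nra.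
  apply Rinv_le_contravar; nra. lra.
Qed.

Lemma Hk : 0 < k.
Proof. apply kk_pos; auto. Qed.

Lemma AE : AS E (/ k) 1.
Proof. apply AS_E; auto. Qed.
Lemma AL1 : AS (fun s => / Lam p 1 (E s)) (- / k) 0.
Proof. apply AS_L1; auto. Qed.
Lemma AL2 : AS (fun s => Lam p 2 (E s)) 0 (-1).
Proof. apply AS_L2; auto. Qed.

Let HEp := HEpos p N M hp hN HM.
Let HEd' := HEd p N M hp hN HM.
Let HL1d' := HL1d p hp.
Let HL1nz' := HL1nz p hp.

Lemma part3 :
     (forall n s, 0 < s < 2 * PI -> ex_derive_n M n s) /\
     exists alpha : R, 0 < alpha /\
       asympt_left_2pi M alpha (2 / (p - 1)) /\
       asympt_left_2pi (fun s => sqrt (M s)) (sqrt alpha) (1 / (p - 1)) /\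
       asympt_left_2pi (fun s => Derive M s)
         (- (2 * alpha / (p - 1))) ((3 - p) / (p - 1)) /\
       asympt_left_2pi (fun s => Derive (fun x => sqrt (M x)) s)
         (- (sqrt alpha / (p - 1))) ((2 - p) / (p - 1)) /\
       asympt_left_2pi (fun s => Derive_n M 2 s)
         (2 * alpha * (3 - p) / (p - 1) ^ 2) ((4 - 2 * p) / (p - 1)) /\
       asympt_left_2pi (fun s => Derive_n (fun x => sqrt (M x)) 2 s)
         (sqrt alpha * (2 - p) / (p - 1) ^ 2) ((3 - 2 * p) / (p - 1)).
Proof.
  split. { intros n s Hs. apply (smooth p N M hp hN HM); auto. }
  set (b := 2 / (p - 1)). set (g := 1 / (p - 1)).
  set (alpha := Rpower (/ k) b).
  assert (Hsq : sqrt alpha = Rpower (/ k) g).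
  { unfold alpha. rewrite sqrt_Rpower. f_equal. unfold b, g. field. lra.
    apply Rinv_0_lt_compat. apply Hk. }
  assert (Hp1 : p - 1 <> 0) by lra.
  exists alpha. split. apply Rpower_pos.
  rewrite Hsq.
  assert (EqM : forall s, 0 < s < 2 * PI -> F0 E (Ha p) b s = M s).
  { intros s Hs. symmetry. apply M_eq; auto. }
  assert (EqS : forall s, 0 < s < 2 * PI -> F0 E (Hb p) g s = sqrt (M s)).
  { intros s Hs. symmetry. apply sqrtM_eq; auto. }
  repeat split; apply AS_final.
  - apply (AS_fext _ _ _ _ EqM). eapply AS_eq. apply (AS_P0 E k Hk AE (Ha p) 1 b AHa).
    unfold alpha; ring. reflexivity.
  - apply (AS_fext _ _ _ _ EqS). eapply AS_eq. apply (AS_P0 E k Hk AE (Hb p) 1 g AHb).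
    ring. reflexivity.
  - apply (AS_fext (G1 E (Lam p 1) (Ha p) (Ha1 p) b)).
    { intros s Hs. rewrite (Derive_ext_loc M (F0 E (Ha p) b)).
      symmetry. apply (Derive_F0 E (Lam p 1) HEp HEd' (Ha p) (Ha1 p) b (Ha_d p)); auto.
      apply loc_eq; auto. intros t Ht. symmetry. apply EqM; auto. }
    eapply AS_eq. apply (AS_G1 E (Lam p 1) k Hk AE AL1 (Ha p) (Ha1 p) 1 (aa p) b AHa AHa1).
    unfold alpha, b; field; auto. unfold b; field; auto.
  - apply (AS_fext (G1 E (Lam p 1) (Hb p) (Hb1 p) g)).
    { intros s Hs. rewrite (Derive_ext_loc (fun x => sqrt (M x)) (F0 E (Hb p) g)).
      symmetry. apply (Derive_F0 E (Lam p 1) HEp HEd' (Hb p) (Hb1 p) g (Hb_d p hp)); auto.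
      apply loc_eq; auto. intros t Ht. symmetry. apply EqS; auto. }
    eapply AS_eq. apply (AS_G1 E (Lam p 1) k Hk AE AL1 (Hb p) (Hb1 p) 1 (aa p / 2) g AHb AHb1).
    unfold g; field; auto. unfold g; field; auto.
  - apply (AS_fext (G2 E (Lam p 1) (Lam p 2) (Ha p) (Ha1 p) Ha2 b)).
    { intros s Hs. rewrite (Derive_n_ext_loc M (F0 E (Ha p) b)).
      symmetry. apply (Derive2_F0 E (Lam p 1) (Lam p 2) HEp HEd' HL1d' HL1nz' (Ha p) (Ha1 p) Ha2 b (Ha_d p) (Ha1_d p)); auto.
      apply loc_eq; auto. intros t Ht. symmetry. apply EqM; auto. }
    eapply AS_eq. apply (AS_G2 E (Lam p 1) (Lam p 2) k Hk AE AL1 AL2 (Ha p) (Ha1 p) Ha2 1 (aa p) b AHa AHa1 AHa2).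
    unfold alpha, b; field; auto. unfold b; field; auto.
  - apply (AS_fext (G2 E (Lam p 1) (Lam p 2) (Hb p) (Hb1 p) (Hb2 p) g)).
    { intros s Hs. rewrite (Derive_n_ext_loc (fun x => sqrt (M x)) (F0 E (Hb p) g)).
      symmetry. apply (Derive2_F0 E (Lam p 1) (Lam p 2) HEp HEd' HL1d' HL1nz' (Hb p) (Hb1 p) (Hb2 p) g (Hb_d p hp) (Hb1_d p hp)); auto.
      apply loc_eq; auto. intros t Ht. symmetry. apply EqS; auto. }
    eapply AS_eq. apply (AS_G2 E (Lam p 1) (Lam p 2) k Hk AE AL1 AL2 (Hb p) (Hb1 p) (Hb2 p) 1 (aa p / 2) g AHb AHb1 AHb2).
    unfold g; field; auto. unfold g; field; auto.
Qed.

End Part3b.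

Theorem lemma2p6 (p : R) (N : R -> R)
  (hp : 1 < p)
  (hN : forall c, 0 <= c -> 0 <= N c /\ N c ^ 2 + 2 / (p + 1) * rpow (N c) (p + 1) = c) :
  (* L is a bijection [0,oo) -> (0, 2π], so M = L^{-1} is well defined *)
  (forall c, 0 <= c -> 0 < period p N c <= 2 * PI) /\
  (forall s, 0 < s <= 2 * PI -> exists! c, 0 <= c /\ period p N c = s) /\
  (forall M : R -> R,
     (forall s, 0 < s <= 2 * PI -> 0 <= M s /\ period p N (M s) = s) ->
     (forall n s, 0 < s < 2 * PI -> ex_derive_n M n s) /\
     exists alpha : R, 0 < alpha /\
       asympt_left_2pi M alpha (2 / (p - 1)) /\
       asympt_left_2pi (fun s => sqrt (M s)) (sqrt alpha) (1 / (p - 1)) /\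
       asympt_left_2pi (fun s => Derive M s)
         (- (2 * alpha / (p - 1))) ((3 - p) / (p - 1)) /\
       asympt_left_2pi (fun s => Derive (fun x => sqrt (M x)) s)
         (- (sqrt alpha / (p - 1))) ((2 - p) / (p - 1)) /\
       asympt_left_2pi (fun s => Derive_n M 2 s)
         (2 * alpha * (3 - p) / (p - 1) ^ 2) ((4 - 2 * p) / (p - 1)) /\
       asympt_left_2pi (fun s => Derive_n (fun x => sqrt (M x)) 2 s)
         (sqrt alpha * (2 - p) / (p - 1) ^ 2) ((3 - 2 * p) / (p - 1))).
Proof.
  split. exact (part1 p N hp hN).
  split. exact (part2 p N hp hN).
  intros M HM. exact (part3 p N M hp hN HM).
Qed.
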